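(* Let $\hat K=[0,1]^2$ with centroid $(x_{\hat K},y_{\hat K})=(1/2,1/2)$, let $\kappa>0$, and let $\epsilon$ be a real, strictly positive, smooth function on $\hat K$. Let $n\in\mathbb{N}$ with $n\ge2$, $p=2n+1$ and $q\ge n+1$. Then there is a constant $C$ independent of $\kappa$ (but possibly depending on $p$) such that $$\inf_{v\in GPW_\kappa^{p,q}(\hat K)}\|f-v\|_{L^2(\hat K)}\le C\kappa^2|\epsilon(x_{\hat K},y_{\hat K})|\,\|f\|_{L^2(\hat K)}\quad\text{for all } f\in\mathcal{P}_1(\mathbb{R}^2),$$ where $\mathcal{P}_1(\mathbb{R}^2)$ is the space of real bivariate polynomials of total degree at most 1.
   Context: Notation: $\mathrm{i}=\sqrt{-1}$. Generalized plane waves (GPWs) on a domain $K$ with distinguished point (centroid) $(x_K,y_K)$: for $\kappa>0$, integer $q\ge1$, $\epsilon$ real, strictly positive and $\mathcal{C}^{q-1}$ on $K$, and direction $\theta$, the GPW is $\varphi=e^{P}$ with $P(x,y)=\sum_{0\le i+j\le q+1}\lambda_{i,j}(x-x_K)^i(y-y_K)^j$, where $\lambda_{0,0}=0$; $(\lambda_{1,0},\lambda_{0,1})=\mathrm{i}\kappa\sqrt{\epsilon(x_K,y_K)}(\cos\theta,\sin\theta)$; $\lambda_{i,j}=0$ for $i\in\{0,1\}$, $2\le i+j\le q+1$; and for $0\le i+j\le q-1$, $$\lambda_{i+2,j}=\frac{1}{(i+2)(i+1)}\Big(-\kappa^2\frac{\partial_x^i\partial_y^j\epsilon(x_K,y_K)}{i!\,j!}-(j+2)(j+1)\lambda_{i,j+2}-\sum_{k=0}^{i}\sum_{l=0}^{j}(i-k+1)(k+1)\lambda_{i-k+1,j-l}\lambda_{k+1,l}-\sum_{k=0}^{j}\sum_{l=0}^{i}(j-k+1)(k+1)\lambda_{i-l,j-k+1}\lambda_{l,k+1}\Big).$$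 $GPW_\kappa^{p,q}(K)$ is the (complex) span of the $p$ GPWs with directions $\theta_l=2\pi(l-1)/p$, $l=1,\dots,p$. *)

(* Defs.v *)
From Stdlib Require Import Reals Factorial.
From Coquelicot Require Import Coquelicot.

Local Open Scope R_scope.

Definition Cexp (z : C) : C :=
  (exp (fst z) * cos (snd z), exp (fst z) * sin (snd z)).

(* csum n f = f 0 + f 1 + ... + f n  (n+1 terms) *)
Fixpoint csum (n : nat) (f : nat -> C) : C :=
  match n with
  | O => f O
  | S m => Cplus (csum m f) (f (S m))
  end.

Definition pd (i j : nat) (e : R -> R -> R) (x y : R) : R :=
  Derive_n (fun x' => Derive_n (fun y' => e x' y') j y) i x.

(* e is C^infinity on the open square (a,b)^2: there is a family g i j of
   continuous functions with g 0 0 = e and d_x g i j = g (i+1) j,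
   d_y g i j = g i (j+1) there. *)
Definition in_open_sq (a b x y : R) : Prop := a < x < b /\ a < y < b.

Definition smooth_on_open_sq (a b : R) (e : R -> R -> R) : Prop :=
  exists g : nat -> nat -> R -> R -> R,
    (forall x y, in_open_sq a b x y -> g O O x y = e x y) /\
    (forall i j x y, in_open_sq a b x y ->
        is_derive (fun t => g i j t y) x (g (S i) j x y) /\
        is_derive (fun t => g i j x t) y (g i (S j) x y) /\
        continuous (fun p : R * R => g i j (fst p) (snd p)) (x, y)).

(* epsilon is smooth on the closed unit square K^ = [0,1]^2:
   smooth on an open neighbourhood (-d, 1+d)^2 of it. *)
Definition smooth_on_Khat (e : R -> R -> R) : Prop :=
  exists d : R, 0 < d /\ smooth_on_open_sq (- d) (1 + d) e.

Definition in_Khat (x y : R) : Prop := 0 <= x <= 1 /\ 0 <= y <= 1.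

Definition xK : R := 1 / 2.
Definition yK : R := 1 / 2.

Definition lam_base (kap : R) (e : R -> R -> R) (th : R) (i j : nat) : C :=
  match i, j with
  | 1%nat, 0%nat => (0, kap * sqrt (e xK yK) * cos th)
  | 0%nat, 1%nat => (0, kap * sqrt (e xK yK) * sin th)
  | _, _ => (0, 0)
  end.

Definition lam_step (kap : R) (e : R -> R -> R) (q : nat) (th : R)
  (prev : nat -> nat -> C) (i2 j : nat) : C :=
  match i2 with
  | O | 1%nat => lam_base kap e th i2 j
  | S (S i) =>
      if Nat.leb (i + j + 1) q then
        Cmult (RtoC (/ (INR (i + 2) * INR (i + 1))))
          (Cminus (Cminus (Cminus
             (RtoC (- kap ^ 2 * pd i j e xK yK / (INR (Factorial.fact i) * INR (Factorial.fact j))))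
             (Cmult (RtoC (INR (j + 2) * INR (j + 1))) (prev i (j + 2)%nat)))
             (csum i (fun k => csum j (fun l =>
                Cmult (RtoC (INR (i - k + 1) * INR (k + 1)))
                  (Cmult (prev (i - k + 1)%nat (j - l)%nat) (prev (k + 1)%nat l))))))
             (csum j (fun k => csum i (fun l =>
                Cmult (RtoC (INR (j - k + 1) * INR (k + 1)))
                  (Cmult (prev (i - l)%nat (j - k + 1)%nat) (prev l (k + 1)%nat))))))
      else (0, 0)
  end.

(* lambda_{i,j}: iterating the step q+2 times fixes all entries with i+j <= q+1
   (the entries with first index <= m+1 are final after m steps). *)
Definition lam (kap : R) (e : R -> R -> R) (q : nat) (th : R) : nat -> nat -> C :=
  Nat.iter (q + 2) (lam_step kap e q th) (lam_base kap e th).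

Definition gpw_P (kap : R) (e : R -> R -> R) (q : nat) (th x y : R) : C :=
  csum (q + 1) (fun i => csum (q + 1 - i) (fun j =>
    Cmult (lam kap e q th i j) (RtoC ((x - xK) ^ i * (y - yK) ^ j)))).

Definition gpw (kap : R) (e : R -> R -> R) (q : nat) (th x y : R) : C :=
  Cexp (gpw_P kap e q th x y).

(* element of GPW_kappa^{p,q}(K^) with complex coefficients c_0..c_{p-1};
   direction theta_l = 2 pi (l-1)/p, l = 1..p, indexed here by l-1 = 0..p-1 *)
Definition gpw_comb (kap : R) (e : R -> R -> R) (p q : nat) (c : nat -> C)
  (x y : R) : C :=
  csum (p - 1) (fun l =>
    Cmult (c l) (gpw kap e q (2 * PI * INR l / INR p) x y)).

Definition L2Khat (g : R -> R -> C) : R :=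
  sqrt (RInt (fun x => RInt (fun y => (Cmod (g x y)) ^ 2) 0 1) 0 1).

Definition best_approx_err (kap : R) (e : R -> R -> R) (p q : nat)
  (f : R -> R -> R) : Rbar :=
  Glb_Rbar (fun r => exists c : nat -> C,
    r = L2Khat (fun x y => Cminus (RtoC (f x y)) (gpw_comb kap e p q c x y))).

(* Main.v *)
Require Import Defs.
From Stdlib Require Import Reals Lra Lia Psatz FunctionalExtensionality.
From Coquelicot Require Import Coquelicot.
Local Open Scope R_scope.

Lemma Cmod_pair_abs (a b : R) : Rabs a <= Cmod (a, b) /\ Rabs b <= Cmod (a, b).
Proof.
  unfold Cmod; simpl. split.
  - rewrite <- sqrt_Rsqr_abs. apply sqrt_le_1_alt. unfold Rsqr. nra.
  - rewrite <- sqrt_Rsqr_abs. apply sqrt_le_1_alt. unfold Rsqr. nra.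
Qed.

Lemma Cmod_pair_le (a b : R) : Cmod (a, b) <= Rabs a + Rabs b.
Proof.
  unfold Cmod; simpl. rewrite <- (sqrt_Rsqr (Rabs a + Rabs b)).
  2: { pose proof (Rabs_pos a); pose proof (Rabs_pos b); lra. }
  apply sqrt_le_1_alt. unfold Rsqr.
  pose proof (Rabs_pos a); pose proof (Rabs_pos b).
  assert (a*a = Rabs a * Rabs a) by (rewrite <- Rabs_mult; symmetry; apply Rabs_pos_eq; nra).
  assert (b*b = Rabs b * Rabs b) by (rewrite <- Rabs_mult; symmetry; apply Rabs_pos_eq; nra).
  nra.
Qed.

Lemma Cmod_0i (b : R) : Cmod (0, b) = Rabs b.
Proof. unfold Cmod; simpl. rewrite <- sqrt_Rsqr_abs. f_equal. unfold Rsqr. ring. Qed.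

Lemma csum_bound (n : nat) (f : nat -> C) (B : R) :
  (forall k, (k <= n)%nat -> Cmod (f k) <= B) -> Cmod (csum n f) <= INR (S n) * B.
Proof.
  induction n as [|n IH]; intros H; simpl csum.
  - simpl. specialize (H 0%nat (le_n _)). lra.
  - eapply Rle_trans. apply Cmod_triangle.
    rewrite S_INR. assert (Cmod (csum n f) <= INR (S n) * B) by (apply IH; intros; apply H; lia).
    specialize (H (S n) (le_n _)). rewrite S_INR in *. lra.
Qed.

Lemma csum_minus (n : nat) (f g : nat -> C) :
  Cminus (csum n f) (csum n g) = csum n (fun k => Cminus (f k) (g k)).
Proof.
  induction n as [|n IH]; simpl; auto.
  rewrite <- IH. destruct (csum n f), (csum n g), (f (S n)), (g (S n)).
  unfold Cminus, Cplus, Copp; simpl. f_equal; ring.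
Qed.

Lemma csum_ext (n : nat) (f g : nat -> C) :
  (forall k, (k <= n)%nat -> f k = g k) -> csum n f = csum n g.
Proof.
  induction n as [|n IH]; intros H; simpl.
  - apply H; lia.
  - rewrite IH by (intros; apply H; lia). rewrite H by lia. reflexivity.
Qed.

Lemma csum_fst (n : nat) (f : nat -> C) : fst (csum n f) = sum_f_R0 (fun k => fst (f k)) n.
Proof. induction n; simpl; auto. rewrite IHn; auto. Qed.
Lemma csum_snd (n : nat) (f : nat -> C) : snd (csum n f) = sum_f_R0 (fun k => snd (f k)) n.
Proof. induction n; simpl; auto. rewrite IHn; auto. Qed.

Lemma fin_bound1 (N : nat) (h : nat -> R) : exists B, 0 <= B /\ forall i, (i <= N)%nat -> Rabs (h i) <= B.
Proof.
  induction N as [|N [B [HB0 HB]]].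
  - exists (Rabs (h 0%nat)). split. apply Rabs_pos. intros i Hi. replace i with 0%nat by lia. lra.
  - exists (Rmax B (Rabs (h (S N)))). split. eapply Rle_trans; [apply HB0|apply Rmax_l].
    intros i Hi. destruct (Nat.eq_dec i (S N)) as [->|Hne]. apply Rmax_r.
    eapply Rle_trans; [apply HB; lia|apply Rmax_l].
Qed.

Lemma fin_bound2 (N : nat) (h : nat -> nat -> R) : exists B, 0 <= B /\ forall i j, (i <= N)%nat -> (j <= N)%nat -> Rabs (h i j) <= B.
Proof.
  induction N as [|N [B [HB0 HB]]].
  - exists (Rabs (h 0%nat 0%nat)). split. apply Rabs_pos. intros i j Hi Hj.
    replace i with 0%nat by lia. replace j with 0%nat by lia. lra.
  - destruct (fin_bound1 (S N) (fun i => h i (S N))) as [B1 [HB1 H1]].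
    destruct (fin_bound1 (S N) (fun j => h (S N) j)) as [B2 [HB2 H2]].
    exists (B + B1 + B2). split. lra.
    intros i j Hi Hj.
    destruct (Nat.eq_dec j (S N)) as [->|Hj'].
    { specialize (H1 i Hi). simpl in H1. lra. }
    destruct (Nat.eq_dec i (S N)) as [->|Hi'].
    { specialize (H2 j Hj). simpl in H2. lra. }
    specialize (HB i j ltac:(lia) ltac:(lia)). lra.
Qed.

Definition Lm (kap : R) (e : R -> R -> R) (q : nat) (th : R) (m : nat) :=
  Nat.iter m (lam_step kap e q th) (lam_base kap e th).

Lemma Lm_low kap e q th m i j : (i <= 1)%nat -> Lm kap e q th m i j = lam_base kap e th i j.
Proof.
  intros Hi. destruct m as [|m]; [reflexivity|].
  unfold Lm. cbn [Nat.iter]. unfold lam_step at 1.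
  destruct i as [|[|i]]; [reflexivity|reflexivity|lia].
Qed.

Lemma base_bound kap e th i j : 0 <= kap ->
  Cmod (lam_base kap e th i j) <= sqrt (e xK yK) * kap.
Proof.
  intros Hk. pose proof (sqrt_pos (e xK yK)).
  destruct i as [|[|i]], j as [|[|j]]; simpl lam_base;
   try (rewrite Cmod_0i; rewrite Rabs_R0; nra).
  - rewrite Cmod_0i. rewrite Rabs_mult. rewrite Rabs_mult.
    rewrite (Rabs_pos_eq kap) by lra. rewrite (Rabs_pos_eq (sqrt _)) by lra.
    pose proof (SIN_bound th). assert (Rabs (sin th) <= 1) by (apply Rabs_le; lra).
    assert (kap*sqrt (e xK yK)*Rabs (sin th) <= kap*sqrt (e xK yK)*1) by (apply Rmult_le_compat_l; nra). lra.
  - rewrite Cmod_0i. rewrite Rabs_mult. rewrite Rabs_mult.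
    rewrite (Rabs_pos_eq kap) by lra. rewrite (Rabs_pos_eq (sqrt _)) by lra.
    pose proof (COS_bound th). assert (Rabs (cos th) <= 1) by (apply Rabs_le; lra).
    assert (kap*sqrt (e xK yK)*Rabs (cos th) <= kap*sqrt (e xK yK)*1) by (apply Rmult_le_compat_l; nra). lra.
Qed.

Lemma base_high kap e th i j : (2 <= i + j)%nat -> lam_base kap e th i j = (0,0).
Proof. intros H. destruct i as [|[|i]], j as [|[|j]]; simpl; try reflexivity; lia. Qed.

Lemma Cmod00 : Cmod (0,0) = 0.
Proof. rewrite Cmod_0i, Rabs_R0. reflexivity. Qed.

Lemma prod_diff (M kap : R) (A A' B B' : C) :
  0 <= M -> 0 < kap <= 1 ->
  Cmod A <= M * kap -> Cmod A' <= M * kap -> Cmod B <= M * kap -> Cmod B' <= M * kap ->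
  ((Cmod A <= M * kap^2 /\ Cmod A' <= M * kap^2 /\ Cmod (Cminus A A') <= M * kap^3) \/
   (Cmod B <= M * kap^2 /\ Cmod B' <= M * kap^2 /\ Cmod (Cminus B B') <= M * kap^3)) ->
  Cmod (Cminus (Cmult A B) (Cmult A' B')) <= 3 * M^2 * kap^3.
Proof.
  intros HM Hk HA HA' HB HB' Hor.
  assert (E : Cminus (Cmult A B) (Cmult A' B') = Cplus (Cmult (Cminus A A') B) (Cmult A' (Cminus B B'))).
  { destruct A, A', B, B'. unfold Cminus, Cplus, Copp, Cmult; simpl. f_equal; ring. }
  rewrite E. eapply Rle_trans. apply Cmod_triangle. rewrite !Cmod_mult.
  assert (DA : Cmod (Cminus A A') <= 2 * M * kap).
  { unfold Cminus. eapply Rle_trans. apply Cmod_triangle. rewrite Cmod_opp. lra. }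
  assert (DB : Cmod (Cminus B B') <= 2 * M * kap).
  { unfold Cminus. eapply Rle_trans. apply Cmod_triangle. rewrite Cmod_opp. lra. }
  pose proof (Cmod_ge_0 (Cminus A A')). pose proof (Cmod_ge_0 (Cminus B B')).
  pose proof (Cmod_ge_0 A'). pose proof (Cmod_ge_0 B).
  assert (k4 : kap^4 <= kap^3) by (simpl; nra).
  assert (0 <= kap^3) by (simpl; nra).
  destruct Hor as [[G1 [G2 G3]]|[G1 [G2 G3]]].
  - assert (Cmod (Cminus A A') * Cmod B <= M*kap^3 * (M*kap)) by (apply Rmult_le_compat; auto).
    assert (Cmod A' * Cmod (Cminus B B') <= M*kap^2 * (2*M*kap)) by (apply Rmult_le_compat; auto).
    assert (M*kap^3*(M*kap) <= M^2*kap^3).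
    { replace (M*kap^3*(M*kap)) with (M^2 * kap^4) by ring. apply Rmult_le_compat_l; auto. nra. }
    replace (M*kap^2*(2*M*kap)) with (2*M^2*kap^3) in * by ring. lra.
  - assert (Cmod (Cminus A A') * Cmod B <= 2*M*kap * (M*kap^2)) by (apply Rmult_le_compat; auto).
    assert (Cmod A' * Cmod (Cminus B B') <= M*kap * (M*kap^3)) by (apply Rmult_le_compat; auto).
    assert (M*kap*(M*kap^3) <= M^2*kap^3).
    { replace (M*kap*(M*kap^3)) with (M^2 * kap^4) by ring. apply Rmult_le_compat_l; auto. nra. }
    replace (2*M*kap*(M*kap^2)) with (2*M^2*kap^3) in * by ring. lra.
Qed.

Lemma step20 kap e q th (P : nat -> nat -> C) :
  0 < e xK yK -> (1 <= q)%nat ->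
  (forall i j, (i <= 1)%nat -> P i j = lam_base kap e th i j) ->
  lam_step kap e q th P 2 0 = (0,0).
Proof.
  intros He Hq HP. unfold lam_step. cbv beta iota.
  replace (Nat.leb (0 + 0 + 1) q) with true by (symmetry; apply Nat.leb_le; lia).
  simpl csum. rewrite !HP by lia. unfold pd. simpl Derive_n. simpl lam_base.
  simpl Factorial.fact. simpl INR.
  unfold Cmult, Cminus, Cplus, Copp, RtoC; simpl.
  pose proof (sqrt_sqrt (e xK yK) ltac:(lra)).
  pose proof (sin2_cos2 th). unfold Rsqr in *.
  f_equal; field_simplify; try nra.
  match goal with |- ?a / 2 = 0 => replace a with 0 end; [field|].
  replace (sqrt (e xK yK) ^ 2) with (e xK yK) by (simpl; lra).
  replace (cos th ^ 2) with (1 - sin th ^ 2) by (simpl; lra). ring.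
Qed.

Definition Inv (M kap : R) (P P' : nat -> nat -> C) : Prop :=
  forall i j, Cmod (P i j) <= M*kap /\ Cmod (P' i j) <= M*kap /\
   ((2 <= i+j)%nat -> Cmod (P i j) <= M*kap^2 /\ Cmod (P' i j) <= M*kap^2 /\
      Cmod (Cminus (P i j) (P' i j)) <= M*kap^3).

Lemma combo_bound (c0 : R) (a b c d : C) Ba Bb Bc Bd :
  0 <= c0 <= 1 -> Cmod a <= Ba -> Cmod b <= Bb -> Cmod c <= Bc -> Cmod d <= Bd ->
  Cmod (Cmult (RtoC c0) (Cminus (Cminus (Cminus a b) c) d)) <= Ba + Bb + Bc + Bd.
Proof.
  intros Hc Ha Hb Hc' Hd. rewrite Cmod_mult, Cmod_R, Rabs_pos_eq by lra.
  assert (Cmod (Cminus (Cminus (Cminus a b) c) d) <= Ba + Bb + Bc + Bd).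
  { unfold Cminus. repeat (eapply Rle_trans; [apply Cmod_triangle|]). rewrite !Cmod_opp.
    pose proof (Cmod_triangle (a + - b)%C (- c)%C). pose proof (Cmod_triangle a (-b)%C).
    rewrite Cmod_opp in *. lra. }
  pose proof (Cmod_ge_0 (Cminus (Cminus (Cminus a b) c) d)). nra.
Qed.

Lemma combo_diff (c0 : R) (a b c d b' c' d' : C) Db Dc Dd :
  0 <= c0 <= 1 -> Cmod (Cminus b b') <= Db -> Cmod (Cminus c c') <= Dc -> Cmod (Cminus d d') <= Dd ->
  Cmod (Cminus (Cmult (RtoC c0) (Cminus (Cminus (Cminus a b) c) d))
               (Cmult (RtoC c0) (Cminus (Cminus (Cminus a b') c') d'))) <= Db + Dc + Dd.
Proof.
  intros Hc Hb Hc' Hd.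
  replace (Cminus (Cmult (RtoC c0) (Cminus (Cminus (Cminus a b) c) d))
               (Cmult (RtoC c0) (Cminus (Cminus (Cminus a b') c') d')))
    with (Cmult (RtoC c0) (Copp (Cplus (Cplus (Cminus b b') (Cminus c c')) (Cminus d d')))).
  2: { destruct a, b, c, d, b', c', d'. unfold Cminus, Cplus, Copp, Cmult, RtoC; simpl. f_equal; ring. }
  rewrite Cmod_mult, Cmod_R, Rabs_pos_eq by lra. rewrite Cmod_opp.
  assert (Cmod (Cplus (Cplus (Cminus b b') (Cminus c c')) (Cminus d d')) <= Db + Dc + Dd).
  { repeat (eapply Rle_trans; [apply Cmod_triangle|]).
    pose proof (Cmod_triangle (Cminus b b') (Cminus c c')). lra. }
  pose proof (Cmod_ge_0 (Cplus (Cplus (Cminus b b') (Cminus c c')) (Cminus d d'))). nra.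
Qed.

Lemma INR_le_q (a N : nat) (c : nat) : (a <= N + c)%nat -> INR a <= INR N + INR c.
Proof. intros H. rewrite <- plus_INR. apply le_INR. lia. Qed.

Lemma coef_bound (a b N : nat) (c : nat) : (a <= N + c)%nat -> (b <= N + c)%nat ->
  0 <= INR a * INR b <= (INR N + INR c)^2.
Proof.
  intros Ha Hb. pose proof (INR_le_q a N c Ha). pose proof (INR_le_q b N c Hb).
  pose proof (pos_INR a). pose proof (pos_INR b). split. nra. simpl. nra.
Qed.

Lemma term_bound (coef K M kap : R) (A B : C) :
  0 <= coef <= K -> Cmod A <= M * kap -> Cmod B <= M * kap ->
  Cmod (Cmult (RtoC coef) (Cmult A B)) <= K * (M * kap)^2.
Proof.
  intros Hc HA HB. rewrite !Cmod_mult, Cmod_R, Rabs_pos_eq by lra.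
  pose proof (Cmod_ge_0 A). pose proof (Cmod_ge_0 B).
  assert (Cmod A * Cmod B <= (M*kap)*(M*kap)) by (apply Rmult_le_compat; auto).
  assert (0 <= Cmod A * Cmod B) by nra. simpl. nra.
Qed.

Lemma term_diff (coef K X : R) (A B A' B' : C) :
  0 <= coef <= K -> Cmod (Cminus (Cmult A B) (Cmult A' B')) <= X ->
  Cmod (Cminus (Cmult (RtoC coef) (Cmult A B)) (Cmult (RtoC coef) (Cmult A' B'))) <= K * X.
Proof.
  intros Hc H.
  replace (Cminus (Cmult (RtoC coef) (Cmult A B)) (Cmult (RtoC coef) (Cmult A' B')))
    with (Cmult (RtoC coef) (Cminus (Cmult A B) (Cmult A' B'))).
  2: { destruct A, B, A', B'. unfold Cminus, Cplus, Copp, Cmult, RtoC; simpl. f_equal; ring. }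
  rewrite Cmod_mult, Cmod_R, Rabs_pos_eq by lra.
  pose proof (Cmod_ge_0 (Cminus (Cmult A B) (Cmult A' B'))). nra.
Qed.

Lemma dsum_bound (i j N : nat) (F : nat -> nat -> C) (B : R) :
  (i <= N)%nat -> (j <= N)%nat -> 0 <= B ->
  (forall k l, (k <= i)%nat -> (l <= j)%nat -> Cmod (F k l) <= B) ->
  Cmod (csum i (fun k => csum j (fun l => F k l))) <= (INR N + 1)^2 * B.
Proof.
  intros Hi Hj HB H.
  eapply Rle_trans. apply csum_bound with (B := INR (S j) * B).
  { intros k Hk. apply csum_bound. intros l Hl. apply H; auto. }
  rewrite !S_INR. pose proof (le_INR _ _ Hi). pose proof (le_INR _ _ Hj).
  pose proof (pos_INR i). pose proof (pos_INR j).
  assert ((INR i + 1) * (INR j + 1) <= (INR N + 1)^2) by (simpl; nra). nra.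
Qed.

Lemma dsum_minus (i j : nat) (F G : nat -> nat -> C) :
  Cminus (csum i (fun k => csum j (fun l => F k l))) (csum i (fun k => csum j (fun l => G k l)))
  = csum i (fun k => csum j (fun l => Cminus (F k l) (G k l))).
Proof.
  rewrite csum_minus. apply csum_ext. intros k _. apply csum_minus.
Qed.

Definition Vf (kap : R) (e : R -> R -> R) (i j : nat) (Pg : nat -> nat -> C) : C :=
  Cmult (RtoC (/ (INR (i + 2) * INR (i + 1))))
   (Cminus (Cminus (Cminus
      (RtoC (- kap ^ 2 * pd i j e xK yK / (INR (Factorial.fact i) * INR (Factorial.fact j))))
      (Cmult (RtoC (INR (j + 2) * INR (j + 1))) (Pg i (j + 2)%nat)))
      (csum i (fun k => csum j (fun l =>
         Cmult (RtoC (INR (i - k + 1) * INR (k + 1)))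
           (Cmult (Pg (i - k + 1)%nat (j - l)%nat) (Pg (k + 1)%nat l))))))
      (csum j (fun k => csum i (fun l =>
         Cmult (RtoC (INR (j - k + 1) * INR (k + 1)))
           (Cmult (Pg (i - l)%nat (j - k + 1)%nat) (Pg l (k + 1)%nat)))))).

Lemma c0_bound (i : nat) : 0 <= / (INR (i + 2) * INR (i + 1)) <= 1.
Proof.
  rewrite !plus_INR. simpl. pose proof (pos_INR i).
  assert (1 <= (INR i + (1 + 1)) * (INR i + 1)) by nra.
  split. apply Rlt_le, Rinv_0_lt_compat; lra.
  rewrite <- Rinv_1. apply Rinv_le_contravar; lra.
Qed.

Lemma T1_bound (kap D : R) (e : R -> R -> R) (i j : nat) :
  Rabs (pd i j e xK yK / (INR (Factorial.fact i) * INR (Factorial.fact j))) <= D ->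
  Cmod (RtoC (- kap ^ 2 * pd i j e xK yK / (INR (Factorial.fact i) * INR (Factorial.fact j))))
   <= D * kap^2.
Proof.
  intros H. rewrite Cmod_R.
  replace (- kap ^ 2 * pd i j e xK yK / (INR (Factorial.fact i) * INR (Factorial.fact j)))
   with (- (kap^2 * (pd i j e xK yK / (INR (Factorial.fact i) * INR (Factorial.fact j))))) by (unfold Rdiv; ring).
  rewrite Rabs_Ropp, Rabs_mult, (Rabs_pos_eq (kap^2)) by (apply pow2_ge_0).
  pose proof (pow2_ge_0 kap). nra.
Qed.

Lemma Vf_bound kap e q i j (Pg : nat -> nat -> C) M D :
  0 <= M -> 0 <= D -> 0 < kap <= 1 -> (i + j + 1 <= q)%nat ->
  Rabs (pd i j e xK yK / (INR (Factorial.fact i) * INR (Factorial.fact j))) <= D ->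
  (forall a b, Cmod (Pg a b) <= M * kap) ->
  (forall a b, (2 <= a + b)%nat -> Cmod (Pg a b) <= M * kap^2) ->
  Cmod (Vf kap e i j Pg) <= (D + (INR q + 2)^2 * M + 2 * ((INR q + 1)^4 * M^2)) * kap^2.
Proof.
  intros HM HD Hk Hl HDb H1 H2. unfold Vf.
  eapply Rle_trans. apply combo_bound. apply c0_bound.
  apply T1_bound. exact HDb.
  { rewrite Cmod_mult, Cmod_R. destruct (coef_bound (j+2) (j+1) q 2 ltac:(lia) ltac:(lia)) as [C0 C1].
    rewrite Rabs_pos_eq by lra. apply Rmult_le_compat; [lra|apply Cmod_ge_0| |apply H2; lia].
    replace (INR q + 2) with (INR q + INR 2) by (simpl; ring). exact C1. }
  { apply dsum_bound with (N := q) (B := (INR q + 1)^2 * (M*kap)^2); try lia.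
    apply Rmult_le_pos; apply pow2_ge_0.
    intros k l Hk' Hl'. apply term_bound; auto.
    destruct (coef_bound (i - k + 1) (k+1) q 1 ltac:(lia) ltac:(lia)) as [C0 C1].
    simpl INR in C1 at 2. split; auto. }
  { apply dsum_bound with (N := q) (B := (INR q + 1)^2 * (M*kap)^2); try lia.
    apply Rmult_le_pos; apply pow2_ge_0.
    intros k l Hk' Hl'. apply term_bound; auto.
    destruct (coef_bound (j - k + 1) (k+1) q 1 ltac:(lia) ltac:(lia)) as [C0 C1].
    simpl INR in C1 at 2. split; auto. }
  replace ((INR q + 1) ^ 2 * ((INR q + 1) ^ 2 * (M * kap) ^ 2)) with ((INR q + 1)^4 * M^2 * kap^2) by ring.
  replace (INR 2) with 2 by (simpl; ring). right; ring.
Qed.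

Lemma Vf_diff kap e q i j (P P' : nat -> nat -> C) M :
  0 <= M -> 0 < kap <= 1 -> (i + j + 1 <= q)%nat -> (i <> 0 \/ j <> 0)%nat ->
  Inv M kap P P' ->
  Cmod (Cminus (Vf kap e i j P) (Vf kap e i j P')) <= ((INR q + 2)^2 * M + 6 * ((INR q + 1)^4 * M^2)) * kap^3.
Proof.
  intros HM Hk Hl Hij HI. unfold Vf.
  assert (Hk3 : 0 <= kap^3) by (simpl; nra).
  eapply Rle_trans. apply combo_diff. apply c0_bound.
  { replace (Cminus (Cmult (RtoC (INR (j + 2) * INR (j + 1))) (P i (j + 2)%nat))
                    (Cmult (RtoC (INR (j + 2) * INR (j + 1))) (P' i (j + 2)%nat)))
      with (Cmult (RtoC (INR (j + 2) * INR (j + 1))) (Cminus (P i (j + 2)%nat) (P' i (j + 2)%nat))).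
    2: { destruct (P i (j+2)%nat), (P' i (j+2)%nat). unfold Cminus, Cplus, Copp, Cmult, RtoC; simpl. f_equal; ring. }
    rewrite Cmod_mult, Cmod_R. destruct (coef_bound (j+2) (j+1) q 2 ltac:(lia) ltac:(lia)) as [C0 C1].
    rewrite Rabs_pos_eq by lra. apply Rmult_le_compat; [lra|apply Cmod_ge_0| |].
    replace (INR q + 2) with (INR q + INR 2) by (simpl; ring). exact C1.
    destruct (HI i (j+2)%nat) as [_ [_ H]]. apply H. lia. }
  { rewrite dsum_minus. apply dsum_bound with (N := q) (B := (INR q + 1)^2 * (3 * M^2 * kap^3)); try lia.
    apply Rmult_le_pos. apply pow2_ge_0. apply Rmult_le_pos; [|lra]. apply Rmult_le_pos; [lra|apply pow2_ge_0].
    intros k l Hk' Hl'. apply term_diff.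
    destruct (coef_bound (i - k + 1) (k+1) q 1 ltac:(lia) ltac:(lia)) as [C0 C1].
    simpl INR in C1 at 2. split; auto.
    destruct (HI (i-k+1)%nat (j-l)%nat) as [A1 [A2 A3]]. destruct (HI (k+1)%nat l) as [B1 [B2 B3]].
    apply prod_diff; auto.
    destruct (Compare_dec.le_lt_dec 2 (i-k+1+(j-l))) as [h|h]. left; apply A3; auto. right; apply B3; lia. }
  { rewrite dsum_minus. apply dsum_bound with (N := q) (B := (INR q + 1)^2 * (3 * M^2 * kap^3)); try lia.
    apply Rmult_le_pos. apply pow2_ge_0. apply Rmult_le_pos; [|lra]. apply Rmult_le_pos; [lra|apply pow2_ge_0].
    intros k l Hk' Hl'. apply term_diff.
    destruct (coef_bound (j - k + 1) (k+1) q 1 ltac:(lia) ltac:(lia)) as [C0 C1].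
    simpl INR in C1 at 2. split; auto.
    destruct (HI (i-l)%nat (j-k+1)%nat) as [A1 [A2 A3]]. destruct (HI l (k+1)%nat) as [B1 [B2 B3]].
    apply prod_diff; auto.
    destruct (Compare_dec.le_lt_dec 2 (i-l+(j-k+1))) as [h|h]. left; apply A3; auto. right; apply B3; lia. }
  replace (INR 2) with 2 by (simpl; ring). right; ring.
Qed.

Lemma step_inv kap e q th th' (P P' : nat -> nat -> C) M D :
  0 < e xK yK -> (1 <= q)%nat -> 0 <= M -> 0 <= D -> 0 < kap <= 1 ->
  (forall i j, (i <= q)%nat -> (j <= q)%nat ->
     Rabs (pd i j e xK yK / (INR (Factorial.fact i) * INR (Factorial.fact j))) <= D) ->
  (forall i j, (i <= 1)%nat -> P i j = lam_base kap e th i j) ->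
  (forall i j, (i <= 1)%nat -> P' i j = lam_base kap e th' i j) ->
  Inv M kap P P' ->
  Inv (D + sqrt (e xK yK) + (INR q + 2)^2 * M + 6 * (INR q + 1)^4 * M^2) kap
      (lam_step kap e q th P) (lam_step kap e q th' P').
Proof.
  intros He Hq HM HD Hk HDb HP HP' HI.
  set (M' := D + sqrt (e xK yK) + (INR q + 2)^2 * M + 6 * (INR q + 1)^4 * M^2).
  pose proof (sqrt_pos (e xK yK)) as Hs.
  pose proof (pos_INR q) as Hq0.
  assert (HM2 : 0 <= M^2) by nra.
  assert (Hq2 : 0 <= (INR q + 2)^2 * M) by (apply Rmult_le_pos; [nra|lra]).
  assert (Hq4 : 0 <= 6 * (INR q + 1)^4 * M^2) by (apply Rmult_le_pos; [|lra]; apply Rmult_le_pos; [lra|]; apply pow_le; lra).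
  assert (HM' : sqrt (e xK yK) <= M') by (unfold M'; lra).
  assert (Hk2 : kap^2 <= kap) by (simpl; nra).
  assert (Hk20 : 0 <= kap^2) by (simpl; nra).
  assert (Hk30 : 0 <= kap^3) by (simpl; nra).
  intros i2 j.
  assert (HbM : forall t jj ii, Cmod (lam_base kap e t ii jj) <= M' * kap).
  { intros t jj ii. eapply Rle_trans. apply base_bound; lra. apply Rmult_le_compat_r; lra. }
  assert (Hbase : forall ii, (ii <= 1)%nat ->
     Inv M' kap (fun a b => lam_base kap e th a b) (fun a b => lam_base kap e th' a b)).
  { intros ii Hii a b. split; [apply HbM|]. split; [apply HbM|].
    intros Hij. rewrite !base_high by exact Hij. rewrite Cmod00.
    assert (0 <= M') by lra.
    split; [apply Rmult_le_pos; lra|]. split; [apply Rmult_le_pos; lra|].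
    unfold Cminus, Cplus, Copp; simpl. rewrite Ropp_0, Rplus_0_r, Cmod00. apply Rmult_le_pos; lra. }
  destruct i2 as [|[|i]].
  - unfold lam_step. cbv beta iota. apply (Hbase 0%nat); lia.
  - unfold lam_step. cbv beta iota. apply (Hbase 0%nat); lia.
  - destruct (Nat.eq_dec i 0) as [Hi0|Hi0]; [destruct (Nat.eq_dec j 0) as [Hj0|Hj0]|].
    { subst i j. rewrite (step20 kap e q th P He Hq HP), (step20 kap e q th' P' He Hq HP').
      assert (0 <= M') by lra. unfold Cminus, Cplus, Copp; simpl. rewrite Ropp_0, Rplus_0_r, Cmod00.
      repeat split; intros; apply Rmult_le_pos; lra. }
    all: assert (Hne : (i <> 0 \/ j <> 0)%nat) by lia.
    all: assert (Eq : forall t Pg, lam_step kap e q t Pg (S (S i)) j =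
                 if Nat.leb (i + j + 1) q then Vf kap e i j Pg else (0,0)) by reflexivity.
    all: rewrite !Eq.
    all: destruct (Nat.leb (i + j + 1) q) eqn:Hl;
      [|assert (0 <= M') by lra; unfold Cminus, Cplus, Copp; simpl; rewrite Ropp_0, Rplus_0_r, Cmod00;
        repeat split; intros; apply Rmult_le_pos; lra].
    all: apply Nat.leb_le in Hl.
    all: assert (HDij := HDb i j ltac:(lia) ltac:(lia)).
    all: assert (B1 : Cmod (Vf kap e i j P) <= M' * kap^2)
           by (eapply Rle_trans; [apply (Vf_bound kap e q i j P M D); auto;
                 intros a b; [apply (HI a b)|intros; apply (HI a b); auto]|];
               apply Rmult_le_compat_r; [lra|]; unfold M'; lra).
    all: assert (B2 : Cmod (Vf kap e i j P') <= M' * kap^2)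
           by (eapply Rle_trans; [apply (Vf_bound kap e q i j P' M D); auto;
                 intros a b; [apply (HI a b)|intros; apply (HI a b); auto]|];
               apply Rmult_le_compat_r; [lra|]; unfold M'; lra).
    all: assert (B3 : Cmod (Cminus (Vf kap e i j P) (Vf kap e i j P')) <= M' * kap^3)
           by (eapply Rle_trans; [apply (Vf_diff kap e q i j P P' M); auto|];
               apply Rmult_le_compat_r; [lra|]; unfold M'; lra).
    all: assert (0 <= M') by lra.
    all: assert (M' * kap^2 <= M' * kap) by (apply Rmult_le_compat_l; lra).
    all: repeat split; intros; lra.
Qed.


Lemma Lm_inv (e : R -> R -> R) (q : nat) : 0 < e xK yK -> (1 <= q)%nat ->
  forall m, exists M, 0 <= M /\ forall kap th th', 0 < kap <= 1 ->
    Inv M kap (Lm kap e q th m) (Lm kap e q th' m).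
Proof.
  intros He Hq.
  destruct (fin_bound2 q (fun i j => pd i j e xK yK / (INR (Factorial.fact i) * INR (Factorial.fact j))))
    as [D [HD0 HD]].
  induction m as [|m [M [HM IH]]].
  - exists (sqrt (e xK yK)). split. apply sqrt_pos.
    intros kap th th' Hk a b. simpl.
    split; [apply base_bound; lra|]. split; [apply base_bound; lra|].
    intros Hij. rewrite !base_high by exact Hij. rewrite Cmod00.
    pose proof (sqrt_pos (e xK yK)).
    assert (0 <= kap^2) by (simpl; nra). assert (0 <= kap^3) by (simpl; nra).
    split; [apply Rmult_le_pos; lra|]. split; [apply Rmult_le_pos; lra|].
    unfold Cminus, Cplus, Copp; simpl. rewrite Ropp_0, Rplus_0_r, Cmod00. apply Rmult_le_pos; lra.
  - eexists. split.
    2: { intros kap th th' Hk. change (Lm kap e q th (S m)) with (lam_step kap e q th (Lm kap e q th m)).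
         change (Lm kap e q th' (S m)) with (lam_step kap e q th' (Lm kap e q th' m)).
         apply (step_inv kap e q th th' _ _ M D); auto.
         intros; apply Lm_low; auto. intros; apply Lm_low; auto. }
    pose proof (sqrt_pos (e xK yK)). pose proof (pos_INR q).
    assert (0 <= M^2) by nra.
    assert (0 <= (INR q + 2)^2 * M) by (apply Rmult_le_pos; [nra|lra]).
    assert (0 <= 6 * (INR q + 1)^4 * M^2) by (apply Rmult_le_pos; [|lra]; apply Rmult_le_pos; [lra|]; apply pow_le; lra).
    lra.
Qed.

Lemma lam_Lm kap e q th : lam kap e q th = Lm kap e q th (q + 2).
Proof. reflexivity. Qed.

Definition Rc kap e q th i j := Cminus (lam kap e q th i j) (lam_base kap e th i j).

Lemma Rc_bounds (e : R -> R -> R) (q : nat) : 0 < e xK yK -> (1 <= q)%nat ->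
  exists M, 0 <= M /\ forall kap th th', 0 < kap <= 1 -> forall i j,
    Cmod (Rc kap e q th i j) <= M * kap^2 /\
    Cmod (Cminus (Rc kap e q th i j) (Rc kap e q th' i j)) <= M * kap^3.
Proof.
  intros He Hq. destruct (Lm_inv e q He Hq (q+2)) as [M [HM HI]].
  exists M. split; auto. intros kap th th' Hk i j.
  assert (0 <= kap^2) by (simpl; nra). assert (0 <= kap^3) by (simpl; nra).
  unfold Rc. rewrite !lam_Lm.
  destruct (Nat.le_gt_cases i 1) as [Hi|Hi].
  - rewrite !Lm_low by auto.
    assert (Z : forall z : C, Cminus z z = (0,0)) by (intros [a b]; unfold Cminus, Cplus, Copp; simpl; f_equal; ring).
    rewrite !Z. unfold Cminus, Cplus, Copp; simpl. rewrite ?Ropp_0, ?Rplus_0_r, Cmod00.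
    split; apply Rmult_le_pos; lra.
  - rewrite !base_high by lia.
    assert (Z : forall z : C, Cminus z (0,0) = z) by (intros [a b]; unfold Cminus, Cplus, Copp; simpl; f_equal; ring).
    rewrite !Z. destruct (HI kap th th' Hk i j) as [_ [_ HH]]. destruct (HH ltac:(lia)) as [H1 [_ H3]]. auto.
Qed.

Lemma csum_plus (n : nat) (f g : nat -> C) :
  csum n (fun k => Cplus (f k) (g k)) = Cplus (csum n f) (csum n g).
Proof.
  induction n as [|n IH]; simpl; auto. rewrite IH.
  destruct (csum n f), (csum n g), (f (S n)), (g (S n)). unfold Cplus; simpl. f_equal; ring.
Qed.

Lemma csum_zero (n : nat) (f : nat -> C) : (forall k, (k <= n)%nat -> f k = (0,0)) -> csum n f = (0,0).
Proof.
  induction n as [|n IH]; intros H; simpl. apply H; lia.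
  rewrite IH by (intros; apply H; lia). rewrite H by lia. unfold Cplus; simpl. f_equal; ring.
Qed.

Lemma csum_two (n : nat) (f : nat -> C) : (1 <= n)%nat -> (forall k, (2 <= k)%nat -> (k <= n)%nat -> f k = (0,0)) ->
  csum n f = Cplus (f 0%nat) (f 1%nat).
Proof.
  induction n as [|n IH]; intros Hn H. lia.
  destruct n as [|n]. reflexivity.
  simpl csum. simpl csum in IH. rewrite IH by (try lia; intros; apply H; lia).
  rewrite (H (S (S n))) by lia. destruct (f 0%nat), (f 1%nat). unfold Cplus; simpl. f_equal; ring.
Qed.

Definition Pr kap e q th x y : C :=
  csum (q + 1) (fun i => csum (q + 1 - i) (fun j =>
    Cmult (Rc kap e q th i j) (RtoC ((x - xK) ^ i * (y - yK) ^ j)))).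

Lemma gpw_P_split kap e q th x y : (1 <= q)%nat ->
  gpw_P kap e q th x y =
  Cplus (0, kap * sqrt (e xK yK) * (cos th * (x - xK) + sin th * (y - yK))) (Pr kap e q th x y).
Proof.
  intros Hq. unfold gpw_P, Pr.
  erewrite csum_ext.
  2: { intros i _. erewrite csum_ext.
       2: { intros j _.
            replace (Cmult (lam kap e q th i j) (RtoC ((x - xK) ^ i * (y - yK) ^ j)))
              with (Cplus (Cmult (lam_base kap e th i j) (RtoC ((x - xK) ^ i * (y - yK) ^ j)))
                          (Cmult (Rc kap e q th i j) (RtoC ((x - xK) ^ i * (y - yK) ^ j)))).
            reflexivity. unfold Rc.
            destruct (lam kap e q th i j), (lam_base kap e th i j). unfold Cplus, Cmult, Cminus, Copp, RtoC; simpl.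
            f_equal; ring. }
       apply csum_plus. }
  rewrite csum_plus. f_equal.
  rewrite csum_two by (try lia; intros k Hk _; apply csum_zero; intros j _;
       rewrite base_high by lia; unfold Cmult, RtoC; simpl; f_equal; ring).
  rewrite (csum_two (q + 1 - 0)) by (try lia; intros k Hk _;
       rewrite base_high by lia; unfold Cmult, RtoC; simpl; f_equal; ring).
  rewrite (csum_two (q + 1 - 1)) by (try lia; intros k Hk _;
       rewrite base_high by lia; unfold Cmult, RtoC; simpl; f_equal; ring).
  simpl lam_base. unfold Cplus, Cmult, RtoC; simpl. f_equal; ring.
Qed.

Lemma pow_le1 (a : R) (n : nat) : 0 <= a <= 1 -> 0 <= a ^ n <= 1.
Proof. intros H. induction n; simpl; nra. Qed.

Lemma mono_bound (x y : R) (i j : nat) : in_Khat x y -> Rabs ((x - xK) ^ i * (y - yK) ^ j) <= 1.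
Proof.
  intros [Hx Hy]. unfold xK, yK in *. rewrite Rabs_mult, <- !RPow_abs.
  assert (0 <= Rabs (x - 1/2) <= 1) by (split; [apply Rabs_pos|apply Rabs_le; lra]).
  assert (0 <= Rabs (y - 1/2) <= 1) by (split; [apply Rabs_pos|apply Rabs_le; lra]).
  pose proof (pow_le1 _ i H). pose proof (pow_le1 _ j H0). nra.
Qed.

Lemma tri_bound (q : nat) (F : nat -> nat -> C) (B : R) : 0 <= B ->
  (forall i j, Cmod (F i j) <= B) ->
  Cmod (csum (q + 1) (fun i => csum (q + 1 - i) (F i))) <= (INR q + 2)^2 * B.
Proof.
  intros HB H. eapply Rle_trans. apply csum_bound with (B := (INR q + 2) * B).
  { intros k Hk. eapply Rle_trans. apply csum_bound. intros; apply H.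
    apply Rmult_le_compat_r; auto. rewrite S_INR. replace (INR q + 2) with (INR (q + 1 - k) + INR k + 1).
    pose proof (pos_INR k). lra. rewrite <- plus_INR. replace (q + 1 - k + k)%nat with (q + 1)%nat by lia.
    rewrite plus_INR. simpl. ring. }
  rewrite S_INR, plus_INR. simpl. pose proof (pos_INR q). right; ring.
Qed.

Lemma Pr_bounds (e : R -> R -> R) (q : nat) : 0 < e xK yK -> (1 <= q)%nat ->
  exists M1, 0 <= M1 /\ forall kap th th' x y, 0 < kap <= 1 -> in_Khat x y ->
    Cmod (Pr kap e q th x y) <= M1 * kap^2 /\
    Cmod (Cminus (Pr kap e q th x y) (Pr kap e q th' x y)) <= M1 * kap^3.
Proof.
  intros He Hq. destruct (Rc_bounds e q He Hq) as [M [HM HR]].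
  exists ((INR q + 2)^2 * M). split. apply Rmult_le_pos; [apply pow2_ge_0|auto].
  intros kap th th' x y Hk Hxy.
  assert (0 <= kap^2) by (simpl; nra). assert (0 <= kap^3) by (simpl; nra).
  split.
  - unfold Pr. rewrite Rmult_assoc. apply tri_bound. apply Rmult_le_pos; auto.
    intros i j. rewrite Cmod_mult, Cmod_R. pose proof (mono_bound x y i j Hxy).
    destruct (HR kap th th' Hk i j) as [G1 _]. pose proof (Cmod_ge_0 (Rc kap e q th i j)).
    pose proof (Rabs_pos ((x - xK) ^ i * (y - yK) ^ j)). nra.
  - unfold Pr. rewrite csum_minus. erewrite csum_ext.
    2: { intros i _. apply csum_minus. }
    rewrite Rmult_assoc. apply tri_bound. apply Rmult_le_pos; auto.
    intros i j.
    replace (Cminus (Cmult (Rc kap e q th i j) (RtoC ((x - xK) ^ i * (y - yK) ^ j)))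
                    (Cmult (Rc kap e q th' i j) (RtoC ((x - xK) ^ i * (y - yK) ^ j))))
      with (Cmult (Cminus (Rc kap e q th i j) (Rc kap e q th' i j)) (RtoC ((x - xK) ^ i * (y - yK) ^ j))).
    2: { destruct (Rc kap e q th i j), (Rc kap e q th' i j). unfold Cminus, Cplus, Copp, Cmult, RtoC; simpl. f_equal; ring. }
    rewrite Cmod_mult, Cmod_R. pose proof (mono_bound x y i j Hxy).
    destruct (HR kap th th' Hk i j) as [_ G1]. pose proof (Cmod_ge_0 (Cminus (Rc kap e q th i j) (Rc kap e q th' i j))).
    pose proof (Rabs_pos ((x - xK) ^ i * (y - yK) ^ j)). nra.
Qed.

Lemma Rabs_le_between (x a : R) : Rabs x <= a -> - a <= x <= a.
Proof. unfold Rabs; destruct (Rcase_abs x); lra. Qed.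

Lemma exp_bound (s : R) : Rabs s <= 1/2 -> Rabs (exp s - 1 - s) <= 2 * s^2.
Proof.
  intros Hs. apply Rabs_le_between in Hs.
  pose proof (exp_ineq1_le s). pose proof (exp_ineq1_le (-s)).
  assert (exp s <= / (1 - s)).
  { rewrite <- (Rinv_inv (exp s)). apply Rinv_le_contravar. lra.
    rewrite <- exp_Ropp. lra. }
  assert (/ (1 - s) - 1 - s = s^2 / (1 - s)) by (field; lra).
  assert (s^2 / (1 - s) <= 2 * s^2).
  { unfold Rdiv. assert (/(1-s) <= 2). { replace 2 with (/ (1/2)) by field. apply Rinv_le_contravar; lra. }
    pose proof (pow2_ge_0 s). nra. }
  apply Rabs_le. pose proof (pow2_ge_0 s). lra.
Qed.

Lemma cos_exp (a : R) : Rabs a <= 1 -> Rabs (cos a - 1 + a^2/2) <= a^4/24.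
Proof.
  intros Ha. apply Rabs_le_between in Ha.
  pose proof (pre_cos_bound a 0 ltac:(lra) ltac:(lra)) as [H1 H2].
  unfold cos_approx, cos_term in H1, H2. simpl in H1, H2.
  apply Rabs_le. split; simpl in *; nra.
Qed.

Lemma sin_exp_pos (a : R) : 0 <= a <= 1 -> Rabs (sin a - a) <= a^3/6.
Proof.
  intros Ha. pose proof (pre_sin_bound a 0 ltac:(lra) ltac:(lra)) as [H1 H2].
  unfold sin_approx, sin_term in H1, H2. simpl in H1, H2.
  destruct Ha as [Ha0 Ha1]. assert (A3: 0 <= a^3) by (simpl; nra). assert (A2: a^2 <= 1) by nra. assert (A5: a^5 <= a^3) by (replace (a^5) with (a^3 * a^2) by ring; nra). apply Rabs_le. field_simplify in H1. field_simplify in H2. split; nra.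
Qed.

Lemma sin_exp (a : R) : Rabs a <= 1 -> Rabs (sin a - a) <= Rabs a ^3.
Proof.
  intros Ha. destruct (Rle_dec 0 a) as [h|h].
  - rewrite (Rabs_pos_eq a) in Ha |- * by lra. pose proof (sin_exp_pos a ltac:(lra)).
    assert (0 <= a^3) by (simpl; nra). lra.
  - rewrite (Rabs_left a) in Ha |- * by lra. pose proof (sin_exp_pos (-a) ltac:(lra)).
    rewrite sin_neg in H. replace (- sin a - - a) with (-(sin a - a)) in H by ring.
    rewrite Rabs_Ropp in H. assert (0 <= (-a)^3) by (simpl; nra). lra.
Qed.

Lemma exp_expand (s r t0 kap A : R) : 1 <= A -> 0 < kap -> A * kap <= 1/2 ->
  Rabs s <= A * kap^2 -> Rabs r <= A * kap^2 -> Rabs t0 <= A * kap ->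
  Rabs (exp s * cos (t0 + r) - (1 + s - t0^2/2)) <= 40 * A^4 * kap^3 /\
  Rabs (exp s * sin (t0 + r) - (t0 + r)) <= 40 * A^4 * kap^3.
Proof.
  intros HA Hk HAk Hs Hr Ht0.
  assert (Hk1 : kap <= 1/2) by nra.
  assert (HAk2 : A * kap^2 <= A * kap) by (apply Rmult_le_compat_l; simpl; nra).
  set (t := t0 + r).
  assert (Ht : Rabs t <= 2 * A * kap).
  { unfold t. eapply Rle_trans. apply Rabs_triang. lra. }
  assert (Ht1 : Rabs t <= 1) by lra.
  assert (Hs1 : Rabs s <= 1/2) by lra.
  pose proof (exp_bound s Hs1) as E1.
  pose proof (cos_exp t Ht1) as E2.
  pose proof (sin_exp t Ht1) as E3.
  set (R1 := exp s - 1 - s) in *.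
  set (R2 := cos t - 1 + t^2/2) in *.
  set (R3 := sin t - t) in *.
  assert (Hc : Rabs (cos t) <= 1) by (apply Rabs_le; pose proof (COS_bound t); lra).
  assert (Hsn : Rabs (sin t) <= 2 * Rabs t).
  { replace (sin t) with (t + R3) by (unfold R3; ring). eapply Rle_trans. apply Rabs_triang.
    assert (Rabs t ^ 3 <= Rabs t) by (pose proof (Rabs_pos t); simpl; nra). lra. }
  pose proof (Rabs_pos t) as Pt. pose proof (Rabs_pos s) as Ps. pose proof (Rabs_pos r) as Pr.
  pose proof (Rabs_pos t0) as Pt0.
  assert (Hk3 : 0 < kap^3) by (apply pow_lt; lra).
  assert (A2 : 1 <= A^2) by nra.
  assert (A3 : A^2 <= A^3) by (replace (A^3) with (A^2 * A) by ring; nra).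
  assert (A4 : A^3 <= A^4) by (replace (A^4) with (A^3 * A) by ring; nra).
  assert (Hs2 : s^2 <= A^2 * kap^4).
  { replace (s^2) with (Rabs s * Rabs s) by (rewrite <- Rabs_mult; rewrite Rabs_pos_eq; [ring|nra]).
    replace (A^2 * kap^4) with ((A*kap^2)*(A*kap^2)) by ring. apply Rmult_le_compat; auto. }
  assert (Hk43 : kap^4 <= kap^3) by (simpl; nra).
  assert (Ht2 : t^2 <= 4 * A^2 * kap^2).
  { replace (t^2) with (Rabs t * Rabs t) by (rewrite <- Rabs_mult; rewrite Rabs_pos_eq; [ring|nra]).
    replace (4 * A^2 * kap^2) with ((2*A*kap)*(2*A*kap)) by ring. apply Rmult_le_compat; auto. }
  assert (Ht4 : t^4 <= 16 * A^4 * kap^4).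
  { replace (t^4) with (t^2*t^2) by ring. replace (16 * A^4 * kap^4) with ((4*A^2*kap^2)*(4*A^2*kap^2)) by ring.
    apply Rmult_le_compat; auto; apply pow2_ge_0. }
  split.
  - replace (exp s * cos t - (1 + s - t0 ^ 2 / 2))
      with ((t0^2 - t^2)/2 + R2 + s * (cos t - 1) + R1 * cos t) .
    2:{ unfold R1, R2, t. field. }
    assert (B1 : Rabs ((t0^2 - t^2)/2) <= 3 * A^2 * kap^3).
    { replace ((t0^2 - t^2)/2) with (- r * (t0 + t) / 2).
      2:{ unfold t. field. }
      unfold Rdiv. rewrite !Rabs_mult, Rabs_Ropp. rewrite (Rabs_pos_eq (/2)) by lra.
      assert (Rabs (t0 + t) <= 3 * A * kap) by (eapply Rle_trans; [apply Rabs_triang|lra]).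
      assert (Rabs r * Rabs (t0 + t) <= (A * kap^2) * (3 * A * kap)) by (apply Rmult_le_compat; auto; apply Rabs_pos).
      replace (A * kap ^ 2 * (3 * A * kap)) with (3 * A^2 * kap^3) in H by ring. nra. }
    assert (B2 : Rabs R2 <= A^4 * kap^3) by nra.
    assert (B3 : Rabs (s * (cos t - 1)) <= 3 * A^3 * kap^3).
    { rewrite Rabs_mult. assert (Rabs (cos t - 1) <= t^2).
      { replace (cos t - 1) with (R2 - t^2/2) by (unfold R2; ring). eapply Rle_trans. apply Rabs_triang.
        rewrite Rabs_Ropp. rewrite (Rabs_pos_eq (t^2/2)) by (pose proof (pow2_ge_0 t); lra).
        assert (t^4 <= t^2) by (replace (t^4) with (t^2*t^2) by ring; assert (t^2 <= 1) by
          (replace (t^2) with (Rabs t * Rabs t) by (rewrite <- Rabs_mult; rewrite Rabs_pos_eq; [ring|nra]); nra); pose proof (pow2_ge_0 t); nra).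
        pose proof (pow2_ge_0 t). lra. }
      assert (Rabs s * Rabs (cos t - 1) <= (A*kap^2) * (4*A^2*kap^2)) by (apply Rmult_le_compat; auto; [apply Rabs_pos|lra]).
      replace ((A*kap^2) * (4*A^2*kap^2)) with (4 * A^3 * kap^4) in H0 by ring.
      assert (4 * A^3 * kap^4 <= 4 * A^3 * (kap^3 / 2)).
      { apply Rmult_le_compat_l. nra. replace (kap^4) with (kap^3 * kap) by ring. nra. }
      assert (0 <= A^3 * kap^3) by (apply Rmult_le_pos; lra). lra. }
    assert (B4 : Rabs (R1 * cos t) <= 2 * A^2 * kap^3).
    { rewrite Rabs_mult. assert (Rabs R1 * Rabs (cos t) <= 2 * s^2 * 1) by (apply Rmult_le_compat; auto; apply Rabs_pos).
      nra. }
    eapply Rle_trans. apply Rabs_triang. eapply Rle_trans. apply Rplus_le_compat_r. apply Rabs_triang.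
    eapply Rle_trans. apply Rplus_le_compat_r. apply Rplus_le_compat_r. apply Rabs_triang.
    nra.
  - fold t. replace (exp s * sin t - t) with (R3 + (s + R1) * sin t) by (unfold R1, R3; ring).
    eapply Rle_trans. apply Rabs_triang. rewrite Rabs_mult.
    assert (Rabs (s + R1) <= 2 * A * kap^2).
    { eapply Rle_trans. apply Rabs_triang. assert (2 * s^2 <= A * kap^2) by nra. lra. }
    assert (Rabs (s + R1) * Rabs (sin t) <= (2 * A * kap^2) * (4 * A * kap)) by (apply Rmult_le_compat; auto; try apply Rabs_pos; lra).
    assert (Rabs t ^ 3 <= 8 * A^3 * kap^3).
    { replace (8 * A^3 * kap^3) with ((2*A*kap)^3) by ring. apply pow_incr. auto. }
    replace ((2 * A * kap^2) * (4 * A * kap)) with (8 * A^2 * kap^3) in H0 by ring. nra.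
Qed.

Lemma tele (g : nat -> R) (N : nat) : sum_f_R0 (fun l => g (S l) - g l) N = g (S N) - g 0%nat.
Proof. induction N; simpl; [ring|]. rewrite IHN. ring. Qed.

Lemma sum_scal_l (a : R) (f : nat -> R) (N : nat) : sum_f_R0 (fun l => a * f l) N = a * sum_f_R0 f N.
Proof. induction N; simpl; [ring|]. rewrite IHN. ring. Qed.

Lemma sum_const (a : R) (N : nat) : sum_f_R0 (fun _ => a) N = a * INR (S N).
Proof. induction N; simpl sum_f_R0; [simpl; ring|]. rewrite IHN. rewrite (S_INR (S N)). ring. Qed.

Lemma sum_trig_x (p k : nat) (x : R) : (1 <= p)%nat -> (0 < x / 2 < PI) -> (INR p * x = 2 * INR k * PI) ->
  sum_f_R0 (fun l => cos (INR l * x)) (p - 1) = 0 /\ sum_f_R0 (fun l => sin (INR l * x)) (p - 1) = 0.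
Proof.
  intros Hp1 Hh Hpx.
  assert (Hs : 0 < sin (x/2)) by (apply sin_gt_0; lra).
  assert (Hpp : S (p - 1) = p) by lia.
  split.
  - apply (Rmult_eq_reg_l (2 * sin (x/2))); [|lra]. rewrite Rmult_0_r.
    rewrite <- sum_scal_l.
    rewrite (sum_eq _ (fun l => sin (INR (S l) * x - x/2) - sin (INR l * x - x/2))).
    2: { intros l _. rewrite S_INR. replace ((INR l + 1) * x - x/2) with (INR l * x + x/2) by field.
         rewrite sin_plus, sin_minus. ring. }
    rewrite (tele (fun l => sin (INR l * x - x/2))). rewrite Hpp, Hpx.
    replace (2 * INR k * PI - x/2) with (- (x/2) + 2 * INR k * PI) by field.
    rewrite sin_period. simpl INR. replace (0 * x - x/2) with (- (x/2)) by field. ring.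
  - apply (Rmult_eq_reg_l (2 * sin (x/2))); [|lra]. rewrite Rmult_0_r.
    rewrite <- sum_scal_l.
    rewrite (sum_eq _ (fun l => (-1) * (cos (INR (S l) * x - x/2) - cos (INR l * x - x/2)))).
    2: { intros l _. rewrite S_INR. replace ((INR l + 1) * x - x/2) with (INR l * x + x/2) by field.
         rewrite cos_plus, cos_minus. ring. }
    rewrite sum_scal_l.
    rewrite (tele (fun l => cos (INR l * x - x/2))). rewrite Hpp, Hpx.
    replace (2 * INR k * PI - x/2) with (- (x/2) + 2 * INR k * PI) by field.
    rewrite cos_period. simpl INR. replace (0 * x - x/2) with (- (x/2)) by field. ring.
Qed.

Lemma sum_trig0 (p k : nat) : (1 <= k)%nat -> (k < p)%nat ->
  sum_f_R0 (fun l => cos (INR l * (2 * PI * INR k / INR p))) (p - 1) = 0 /\ sum_f_R0 (fun l => sin (INR l * (2 * PI * INR k / INR p))) (p - 1) = 0.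
Proof.
  intros Hk Hp.
  assert (Hp0 : 0 < INR p) by (apply lt_0_INR; lia).
  assert (Hkp : INR k < INR p) by (apply lt_INR; lia).
  assert (Hk0 : 1 <= INR k) by (apply (le_INR 1); lia).
  pose proof PI_RGT_0.
  apply (sum_trig_x p k); [lia| |field; lra].
  split. apply Rmult_lt_0_compat; [|lra]. unfold Rdiv. apply Rmult_lt_0_compat; [nra|].
  apply Rinv_0_lt_compat; lra.
  replace (2 * PI * INR k / INR p / 2) with (PI * (INR k / INR p)) by (field; lra).
  assert (INR k / INR p < 1). { apply (Rmult_lt_reg_r (INR p)); auto. unfold Rdiv. rewrite Rmult_assoc, Rinv_l; lra. }
  assert (0 < INR k / INR p) by (unfold Rdiv; apply Rmult_lt_0_compat; [lra|apply Rinv_0_lt_compat; lra]). nra.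
Qed.

Definition thl (p l : nat) : R := 2 * PI * INR l / INR p.

Lemma trig_k (p k : nat) : (1 <= k)%nat -> (k < p)%nat ->
  sum_f_R0 (fun l => cos (INR k * thl p l)) (p - 1) = 0 /\
  sum_f_R0 (fun l => sin (INR k * thl p l)) (p - 1) = 0.
Proof.
  intros Hk Hp. assert (Hp0 : 0 < INR p) by (apply lt_0_INR; lia).
  destruct (sum_trig0 p k Hk Hp) as [H1 H2]. split.
  - rewrite <- H1. apply sum_eq. intros l _. f_equal. unfold thl. field. lra.
  - rewrite <- H2. apply sum_eq. intros l _. f_equal. unfold thl. field. lra.
Qed.

Lemma cos3 (t : R) : cos (3 * t) = cos t ^ 3 - 3 * cos t * sin t ^ 2.
Proof. replace (3 * t) with (2 * t + t) by ring. rewrite cos_plus, cos_2a, sin_2a. ring. Qed.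
Lemma sin3 (t : R) : sin (3 * t) = 3 * cos t ^ 2 * sin t - sin t ^ 3.
Proof. replace (3 * t) with (2 * t + t) by ring. rewrite sin_plus, cos_2a, sin_2a. ring. Qed.

Lemma sum_lin2 (a b : R) (f g : nat -> R) (N : nat) :
  sum_f_R0 (fun l => a * f l + b * g l) N = a * sum_f_R0 f N + b * sum_f_R0 g N.
Proof. rewrite sum_plus, !sum_scal_l. reflexivity. Qed.

Lemma mono_sums (p : nat) : (4 <= p)%nat ->
  let C := fun l => cos (thl p l) in let Sn := fun l => sin (thl p l) in
  sum_f_R0 C (p - 1) = 0 /\ sum_f_R0 Sn (p - 1) = 0 /\
  sum_f_R0 (fun l => C l ^ 2) (p - 1) = INR p / 2 /\
  sum_f_R0 (fun l => Sn l ^ 2) (p - 1) = INR p / 2 /\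
  sum_f_R0 (fun l => C l * Sn l) (p - 1) = 0 /\
  sum_f_R0 (fun l => C l ^ 3) (p - 1) = 0 /\
  sum_f_R0 (fun l => C l ^ 2 * Sn l) (p - 1) = 0 /\
  sum_f_R0 (fun l => C l * Sn l ^ 2) (p - 1) = 0 /\
  sum_f_R0 (fun l => Sn l ^ 3) (p - 1) = 0.
Proof.
  intros Hp C Sn.
  destruct (trig_k p 1 ltac:(lia) ltac:(lia)) as [c1 s1].
  destruct (trig_k p 2 ltac:(lia) ltac:(lia)) as [c2 s2].
  destruct (trig_k p 3 ltac:(lia) ltac:(lia)) as [c3 s3].
  simpl INR in c1, s1, c2, s2, c3, s3.
  replace (1 + 1) with 2 in c2, s2 by ring. replace (1 + 1 + 1) with 3 in c3, s3 by ring.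
  rewrite (sum_eq (fun l => cos (1 * thl p l)) C) in c1 by (intros; unfold C; f_equal; ring).
  rewrite (sum_eq (fun l => sin (1 * thl p l)) Sn) in s1 by (intros; unfold Sn; f_equal; ring).
  assert (HP : forall l, C l ^ 2 + Sn l ^ 2 = 1).
  { intros l. pose proof (sin2_cos2 (thl p l)). unfold C, Sn, Rsqr in *. simpl. lra. }
  assert (Hpp : INR (S (p - 1)) = INR p) by (f_equal; lia).
  split; [auto|]. split; [auto|].
  split.
  { rewrite (sum_eq _ (fun l => /2 * 1 + /2 * cos (2 * thl p l))).
    2: { intros l _. rewrite cos_2a_cos. unfold C. simpl. field. }
    rewrite sum_plus, !sum_scal_l, sum_const, c2, Hpp. field. }
  split.
  { rewrite (sum_eq _ (fun l => /2 * 1 + (-/2) * cos (2 * thl p l))).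
    2: { intros l _. rewrite cos_2a_sin. unfold Sn. simpl. field. }
    rewrite sum_plus, !sum_scal_l, sum_const, c2, Hpp. field. }
  split.
  { rewrite (sum_eq _ (fun l => /2 * sin (2 * thl p l))).
    2: { intros l _. rewrite sin_2a. unfold C, Sn. field. }
    rewrite sum_scal_l, s2. ring. }
  split.
  { rewrite (sum_eq _ (fun l => (3/4) * C l + (1/4) * cos (3 * thl p l))).
    2: { intros l _. rewrite cos3. fold (C l) (Sn l). specialize (HP l).
         replace (Sn l ^ 2) with (1 - C l ^ 2) by lra. field. }
    rewrite sum_lin2, c1, c3. ring. }
  split.
  { rewrite (sum_eq _ (fun l => (1/4) * Sn l + (1/4) * sin (3 * thl p l))).
    2: { intros l _. rewrite sin3. fold (C l) (Sn l). specialize (HP l).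
         replace (C l ^ 2) with (1 - Sn l ^ 2) by lra. field. }
    rewrite sum_lin2, s1, s3. ring. }
  split.
  { rewrite (sum_eq _ (fun l => (1/4) * C l + (-1/4) * cos (3 * thl p l))).
    2: { intros l _. rewrite cos3. fold (C l) (Sn l). specialize (HP l).
         replace (Sn l ^ 2) with (1 - C l ^ 2) by lra. field. }
    rewrite sum_lin2, c1, c3. ring. }
  { rewrite (sum_eq _ (fun l => (3/4) * Sn l + (-1/4) * sin (3 * thl p l))).
    2: { intros l _. rewrite sin3. fold (C l) (Sn l). specialize (HP l).
         replace (C l ^ 2) with (1 - Sn l ^ 2) by lra. field. }
    rewrite sum_lin2, s1, s3. ring. }
Qed.

Definition Ct (h : R -> R -> R) : Prop := forall z : R * R, continuous (fun w : R * R => h (fst w) (snd w)) z.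

Lemma Ct_const c : Ct (fun _ _ => c).
Proof. intros z. apply continuous_const. Qed.
Lemma Ct_x : Ct (fun x _ => x).
Proof. intros [x y]. apply continuous_fst. Qed.
Lemma Ct_y : Ct (fun _ y => y).
Proof. intros [x y]. apply continuous_snd. Qed.
Lemma Ct_plus f g : Ct f -> Ct g -> Ct (fun x y => f x y + g x y).
Proof. intros Hf Hg z. apply (continuous_plus (fun w : R*R => f (fst w) (snd w)) (fun w : R*R => g (fst w) (snd w))); auto. Qed.
Lemma Ct_mult f g : Ct f -> Ct g -> Ct (fun x y => f x y * g x y).
Proof. intros Hf Hg z. apply (continuous_mult (fun w : R*R => f (fst w) (snd w)) (fun w : R*R => g (fst w) (snd w))); auto. Qed.
Lemma Ct_opp f : Ct f -> Ct (fun x y => - f x y).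
Proof. intros Hf. replace (fun x y => - f x y) with (fun x y => (-1) * f x y).
  apply Ct_mult; auto. apply Ct_const. apply functional_extensionality; intros; apply functional_extensionality; intros; ring. Qed.
Lemma Ct_minus f g : Ct f -> Ct g -> Ct (fun x y => f x y - g x y).
Proof. intros. apply Ct_plus; auto. apply Ct_opp; auto. Qed.
Lemma Ct_pow f n : Ct f -> Ct (fun x y => f x y ^ n).
Proof. intros Hf. induction n; simpl. apply Ct_const. apply Ct_mult; auto. Qed.
Lemma Ct_exp f : Ct f -> Ct (fun x y => exp (f x y)).
Proof. intros Hf z. apply (continuous_comp (fun w : R*R => f (fst w) (snd w)) exp). auto. apply continuous_exp. Qed.
Lemma Ct_cos f : Ct f -> Ct (fun x y => cos (f x y)).
Proof. intros Hf z. apply (continuous_comp (fun w : R*R => f (fst w) (snd w)) cos). auto. apply continuous_cos. Qed.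
Lemma Ct_sin f : Ct f -> Ct (fun x y => sin (f x y)).
Proof. intros Hf z. apply (continuous_comp (fun w : R*R => f (fst w) (snd w)) sin). auto. apply continuous_sin. Qed.

Definition CC (G : R -> R -> C) : Prop := Ct (fun x y => fst (G x y)) /\ Ct (fun x y => snd (G x y)).

Lemma CC_R f : Ct f -> CC (fun x y => RtoC (f x y)).
Proof. intros H. split; simpl. auto. apply Ct_const. Qed.
Lemma CC_const c : CC (fun _ _ => c).
Proof. split; apply Ct_const. Qed.
Lemma CC_plus F G : CC F -> CC G -> CC (fun x y => Cplus (F x y) (G x y)).
Proof. intros [F1 F2] [G1 G2]. split; simpl; apply Ct_plus; auto. Qed.
Lemma CC_mult F G : CC F -> CC G -> CC (fun x y => Cmult (F x y) (G x y)).
Proof. intros [F1 F2] [G1 G2]. split; simpl.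
  apply Ct_minus; apply Ct_mult; auto. apply Ct_plus; apply Ct_mult; auto. Qed.
Lemma CC_minus F G : CC F -> CC G -> CC (fun x y => Cminus (F x y) (G x y)).
Proof. intros [F1 F2] [G1 G2]. split; simpl; apply Ct_plus; auto; apply Ct_opp; auto. Qed.
Lemma CC_exp F : CC F -> CC (fun x y => Cexp (F x y)).
Proof. intros [F1 F2]. split; simpl; apply Ct_mult; auto using Ct_exp, Ct_cos, Ct_sin. Qed.
Lemma CC_csum n (F : nat -> R -> R -> C) : (forall k, CC (F k)) -> CC (fun x y => csum n (fun k => F k x y)).
Proof. intros H. induction n; simpl. apply H. apply (CC_plus (fun x y => csum n (fun k => F k x y)) (F (S n))); auto. Qed.

Lemma Ct_slice h u y : Ct h -> continuous (fun t => h u t) y.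
Proof.
  intros H. apply (continuous_comp_2 (fun _ => u) (fun t => t) h).
  apply continuous_const. apply continuous_id. apply H.
Qed.

Lemma Ct_2d h x y : Ct h -> continuity_2d_pt h x y.
Proof. intros H. apply continuity_2d_pt_filterlim. apply (H (x, y)). Qed.

Lemma Ct_exRInt h u : Ct h -> ex_RInt (fun t => h u t) 0 1.
Proof. intros H. apply (@ex_RInt_continuous R_CompleteNormedModule). intros; apply Ct_slice; auto. Qed.

Lemma int_cont h z : Ct h -> continuous (fun x => RInt (fun y => h x y) 0 1) z.
Proof.
  intros H. apply continuity_pt_filterlim.
  unfold continuity_pt, continue_in, limit1_in, limit_in. intros eps Heps. simpl. unfold R_dist.
  destruct (uniform_continuity_2d h (z - 1) (z + 1) 0 1 (fun x y _ _ => Ct_2d h x y H) (mkposreal (eps/2) ltac:(lra)))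
    as [d Hd].
  exists (Rmin d 1). split. apply Rmin_pos; [apply cond_pos|lra].
  intros x [_ Hx].
  assert (Hx1 : Rabs (x - z) < d) by (eapply Rlt_le_trans; [apply Hx|apply Rmin_l]).
  assert (Hx2 : Rabs (x - z) < 1) by (eapply Rlt_le_trans; [apply Hx|apply Rmin_r]).
  apply Rabs_def2 in Hx2.
  pose proof (RInt_minus (fun y => h x y) (fun y => h z y) 0 1 (Ct_exRInt h x H) (Ct_exRInt h z H)) as E.
  unfold minus, plus, opp in E; simpl in E.
  replace (RInt (fun y : R => h x y) 0 1 - RInt (fun y : R => h z y) 0 1)
    with (RInt (fun y => h x y + - h z y) 0 1) by (rewrite E; unfold Rminus; reflexivity).
  eapply Rle_lt_trans. apply abs_RInt_le_const with (M := eps/2). lra.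
  { apply (@ex_RInt_continuous R_CompleteNormedModule). intros t _. apply (Ct_slice (fun a b => h a b + - h z b)).
    apply Ct_plus. exact H. apply Ct_opp. intros w. apply (continuous_comp (fun w : R*R => snd w) (fun b => h z b)).
    destruct w; apply continuous_snd. apply Ct_slice; auto. }
  intros t Ht. apply Rlt_le. apply (Hd z t x t); try lra.
  rewrite Rminus_diag, Rabs_R0. apply cond_pos.
  lra.
Qed.

Lemma L2_bound (G : R -> R -> C) (B : R) : CC G -> 0 <= B ->
  (forall x y, in_Khat x y -> Cmod (G x y) <= B) -> L2Khat G <= B.
Proof.
  intros [G1 G2] HB Hb.
  set (h := fun x y => fst (G x y) ^ 2 + snd (G x y) ^ 2).
  assert (Hh : Ct h) by (apply Ct_plus; apply Ct_pow; auto).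
  assert (Eh : forall x y, Cmod (G x y) ^ 2 = h x y).
  { intros x y. unfold h, Cmod. rewrite pow2_sqrt. ring. pose proof (pow2_ge_0 (fst (G x y))). pose proof (pow2_ge_0 (snd (G x y))). lra. }
  unfold L2Khat.
  rewrite (RInt_ext (fun x => RInt (fun y => Cmod (G x y) ^ 2) 0 1) (fun x => RInt (fun y => h x y) 0 1)).
  2: { intros x _. apply RInt_ext. intros; apply Eh. }
  rewrite <- (sqrt_pow2 B HB). apply sqrt_le_1_alt.
  assert (RInt (fun _ => B^2) 0 1 = B^2) by (rewrite RInt_const; unfold scal; simpl; unfold mult; simpl; ring).
  rewrite <- H. apply RInt_le. lra.
  apply (@ex_RInt_continuous R_CompleteNormedModule). intros; apply int_cont; auto.
  apply ex_RInt_const.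
  intros x Hx.
  assert (RInt (fun _ => B^2) 0 1 = B^2) as H' by (rewrite RInt_const; unfold scal; simpl; unfold mult; simpl; ring).
  rewrite <- H'. apply RInt_le. lra. apply Ct_exRInt; auto. apply ex_RInt_const.
  intros y Hy. rewrite <- Eh. pose proof (Hb x y ltac:(unfold in_Khat; lra)). pose proof (Cmod_ge_0 (G x y)).
  simpl. nra.
Qed.

Lemma poly_int (w c : R) :
  RInt (fun y => (w + c * y) ^ 2) 0 1 = w^2 + w * c + c^2 / 3.
Proof.
  apply is_RInt_unique.
  replace (w^2 + w * c + c^2/3) with
    (minus ((fun y => w^2 * y + w * c * y^2 + c^2 * y^3 / 3) 1) ((fun y => w^2 * y + w * c * y^2 + c^2 * y^3 / 3) 0)).
  2: { unfold minus, plus, opp; simpl. field. }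
  apply (is_RInt_derive (V := R_CompleteNormedModule) (fun y => w^2 * y + w * c * y^2 + c^2 * y^3 / 3)).
  - intros y _. auto_derive; auto. field.
  - intros y _. apply (ex_derive_continuous (K := R_AbsRing) (V := R_NormedModule)). auto_derive. auto.
Qed.

Lemma L2_affine (a b c : R) :
  L2Khat (fun x y => RtoC (a + b * x + c * y)) = sqrt (a^2 + b^2/3 + c^2/3 + a*b + a*c + b*c/2).
Proof.
  unfold L2Khat. f_equal.
  rewrite (RInt_ext _ (fun x => (a + b * x)^2 + (a + b * x) * c + c^2/3)).
  2: { intros x _. rewrite <- poly_int. apply RInt_ext. intros y _. rewrite Cmod_R, pow2_abs. match goal with |- ?A = ?B => change (@eq R A B) end; ring. }
  apply is_RInt_unique.
  replace (a^2 + b^2/3 + c^2/3 + a*b + a*c + b*c/2) with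
    (minus ((fun x => a^2 * x + a * b * x^2 + b^2 * x^3 / 3 + a * c * x + b * c * x^2 / 2 + c^2 / 3 * x) 1)
           ((fun x => a^2 * x + a * b * x^2 + b^2 * x^3 / 3 + a * c * x + b * c * x^2 / 2 + c^2 / 3 * x) 0)).
  2: { unfold minus, plus, opp; simpl. field. }
  apply (is_RInt_derive (V := R_CompleteNormedModule) (fun x => a^2 * x + a * b * x^2 + b^2 * x^3 / 3 + a * c * x + b * c * x^2 / 2 + c^2 / 3 * x)).
  - intros x _. auto_derive; auto. field.
  - intros x _. apply (ex_derive_continuous (K := R_AbsRing) (V := R_NormedModule)). auto_derive. auto.
Qed.

Lemma t0_bound (kap e0 th x y : R) : 0 <= kap -> 0 <= e0 -> in_Khat x y ->
  Rabs (kap * sqrt e0 * (cos th * (x - xK) + sin th * (y - yK))) <= kap * sqrt e0.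
Proof.
  intros Hk He [Hx Hy]. unfold xK, yK.
  rewrite Rabs_mult, (Rabs_pos_eq (kap * sqrt e0)) by (apply Rmult_le_pos; [lra|apply sqrt_pos]).
  assert (Rabs (cos th * (x - 1/2) + sin th * (y - 1/2)) <= 1).
  { eapply Rle_trans. apply Rabs_triang. rewrite !Rabs_mult.
    assert (Rabs (cos th) <= 1) by (apply Rabs_le; pose proof (COS_bound th); lra).
    assert (Rabs (sin th) <= 1) by (apply Rabs_le; pose proof (SIN_bound th); lra).
    assert (Rabs (x - 1/2) <= 1/2) by (apply Rabs_le; lra).
    assert (Rabs (y - 1/2) <= 1/2) by (apply Rabs_le; lra).
    pose proof (Rabs_pos (cos th)). pose proof (Rabs_pos (sin th)).
    pose proof (Rabs_pos (x - 1/2)). pose proof (Rabs_pos (y - 1/2)). nra. }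
  assert (0 <= kap * sqrt e0) by (apply Rmult_le_pos; [lra|apply sqrt_pos]). nra.
Qed.

Lemma gpw_expand (e : R -> R -> R) (q : nat) (M1 kap th x y : R) :
  0 < e xK yK -> (1 <= q)%nat -> 0 <= M1 -> 0 < kap <= 1 ->
  (1 + M1 + sqrt (e xK yK)) * kap <= 1/2 -> in_Khat x y ->
  Cmod (Pr kap e q th x y) <= M1 * kap^2 ->
  let t0 := kap * sqrt (e xK yK) * (cos th * (x - xK) + sin th * (y - yK)) in
  let A := 1 + M1 + sqrt (e xK yK) in
  Rabs (fst (gpw kap e q th x y) - (1 + fst (Pr kap e q th x y) - t0^2/2)) <= 40 * A^4 * kap^3 /\
  Rabs (snd (gpw kap e q th x y) - (t0 + snd (Pr kap e q th x y))) <= 40 * A^4 * kap^3.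
Proof.
  intros He Hq HM1 Hk HA Hxy HP t0 A.
  unfold gpw. rewrite gpw_P_split by auto. fold t0.
  destruct (Pr kap e q th x y) as [s r] eqn:EQ. simpl.
  pose proof (Cmod_pair_abs s r) as [Hs Hr].
  pose proof (sqrt_pos (e xK yK)).
  assert (HAk2 : M1 * kap^2 <= A * kap^2) by (apply Rmult_le_compat_r; [simpl; nra|unfold A; lra]).
  replace (0 + s) with s by ring.
  apply exp_expand; try lra.
  - unfold A; lra.
  - unfold A. lra.
  - eapply Rle_trans. apply t0_bound; auto; lra.
    rewrite Rmult_comm. apply Rmult_le_compat_r; [lra|]. unfold A; lra.
Qed.

Lemma sum_poly (N : nat) (a0 a1 a2 a3 a4 a5 a6 a7 a8 a9 : R) (f1 f2 f3 f4 f5 f6 f7 f8 f9 : nat -> R) :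
  sum_f_R0 (fun l => a0 + a1 * f1 l + a2 * f2 l + a3 * f3 l + a4 * f4 l + a5 * f5 l
                      + a6 * f6 l + a7 * f7 l + a8 * f8 l + a9 * f9 l) N =
  a0 * INR (S N) + a1 * sum_f_R0 f1 N + a2 * sum_f_R0 f2 N + a3 * sum_f_R0 f3 N + a4 * sum_f_R0 f4 N
  + a5 * sum_f_R0 f5 N + a6 * sum_f_R0 f6 N + a7 * sum_f_R0 f7 N + a8 * sum_f_R0 f8 N + a9 * sum_f_R0 f9 N.
Proof.
  rewrite !sum_plus, !sum_scal_l, sum_const. ring.
Qed.

Lemma main_sums (p : nat) (u b c X Y kap se s0 r0 : R) (eta1 eta2 : nat -> R) :
  (4 <= p)%nat -> 0 < kap -> 0 < se ->
  let C := fun l => cos (thl p l) in let Sn := fun l => sin (thl p l) in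
  let t := fun l => kap * se * (C l * X + Sn l * Y) in
  let cr := u / INR p in
  let ci := fun l => - (2 / (INR p * kap * se)) * (b * C l + c * Sn l) in
  sum_f_R0 (fun l => cr * (1 + s0 - t l ^ 2 / 2 + eta1 l) - ci l * (t l + r0 + eta2 l)) (p - 1)
    = u + b * X + c * Y + (u * s0 - u * kap^2 * se^2 * (X^2 + Y^2) / 4)
      + sum_f_R0 (fun l => cr * eta1 l - ci l * eta2 l) (p - 1) /\
  sum_f_R0 (fun l => cr * (t l + r0 + eta2 l) + ci l * (1 + s0 - t l ^ 2 / 2 + eta1 l)) (p - 1)
    = u * r0 + sum_f_R0 (fun l => cr * eta2 l + ci l * eta1 l) (p - 1).
Proof.
  intros Hp Hk Hse C Sn t cr ci.
  assert (Hp0 : 0 < INR p) by (apply lt_0_INR; lia).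
  assert (Hpp : INR (S (p - 1)) = INR p) by (f_equal; lia).
  destruct (mono_sums p Hp) as [m1 [m2 [m3 [m4 [m5 [m6 [m7 [m8 m9]]]]]]]].
  fold C Sn in m1, m2, m3, m4, m5, m6, m7, m8, m9.
  set (g := 2 / (INR p * kap * se)).
  split.
  - rewrite (sum_eq _ (fun l =>
        (cr * (1 + s0)) + (g * b * r0) * C l + (g * c * r0) * Sn l
        + (- cr * kap^2 * se^2 * X^2 / 2 + g * kap * se * b * X) * (C l ^ 2)
        + (- cr * kap^2 * se^2 * Y^2 / 2 + g * kap * se * c * Y) * (Sn l ^ 2)
        + (- cr * kap^2 * se^2 * X * Y + g * kap * se * (b * Y + c * X)) * (C l * Sn l)
        + 0 * (C l ^ 3) + 0 * (C l ^ 2 * Sn l) + 0 * (C l * Sn l ^ 2) + 0 * (Sn l ^ 3)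
        + (cr * eta1 l - ci l * eta2 l))).
    2: { intros l _. unfold t, ci. fold g. field. }
    rewrite sum_plus.
    rewrite (sum_poly (p - 1) _ _ _ _ _ _ _ _ _ _ C Sn (fun l => C l ^ 2) (fun l => Sn l ^ 2) (fun l => C l * Sn l)
               (fun l => C l ^ 3) (fun l => C l ^ 2 * Sn l) (fun l => C l * Sn l ^ 2) (fun l => Sn l ^ 3)).
    unfold C, Sn in *. rewrite Hpp, m1, m2, m3, m4, m5, m6, m7, m8, m9. unfold cr, g. field. lra.
  - rewrite (sum_eq _ (fun l =>
        (cr * r0) + (cr * kap * se * X - g * b * (1 + s0)) * C l + (cr * kap * se * Y - g * c * (1 + s0)) * Sn l
        + 0 * (C l ^ 2) + 0 * (Sn l ^ 2) + 0 * (C l * Sn l)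
        + (g * kap^2 * se^2 / 2 * b * X^2) * (C l ^ 3)
        + (g * kap^2 * se^2 / 2 * (2 * b * X * Y + c * X^2)) * (C l ^ 2 * Sn l)
        + (g * kap^2 * se^2 / 2 * (b * Y^2 + 2 * c * X * Y)) * (C l * Sn l ^ 2)
        + (g * kap^2 * se^2 / 2 * c * Y^2) * (Sn l ^ 3)
        + (cr * eta2 l + ci l * eta1 l))).
    2: { intros l _. unfold t, ci. fold g. field. }
    rewrite sum_plus.
    rewrite (sum_poly (p - 1) _ _ _ _ _ _ _ _ _ _ C Sn (fun l => C l ^ 2) (fun l => Sn l ^ 2) (fun l => C l * Sn l)
               (fun l => C l ^ 3) (fun l => C l ^ 2 * Sn l) (fun l => C l * Sn l ^ 2) (fun l => Sn l ^ 3)).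
    unfold C, Sn in *. rewrite Hpp, m1, m2, m3, m4, m5, m6, m7, m8, m9. unfold cr. field. lra.
Qed.

Lemma err_sum (N : nat) (cr : R) (ci eta1 eta2 : nat -> R) (E D : R) (sg : R) :
  0 <= E -> (sg = 1 \/ sg = -1) ->
  (forall l, Rabs (eta1 l) <= E) -> (forall l, Rabs (eta2 l) <= E) -> (forall l, Rabs (ci l) <= D) ->
  Rabs (sum_f_R0 (fun l => cr * eta1 l + sg * ci l * eta2 l) N) <= INR (S N) * ((Rabs cr + D) * E).
Proof.
  intros HE Hsg H1 H2 H3.
  eapply Rle_trans. apply sum_f_R0_triangle.
  rewrite Rmult_comm, <- sum_const. apply sum_Rle. intros l _.
  eapply Rle_trans. apply Rabs_triang. rewrite !Rabs_mult.
  assert (Rabs sg = 1) by (destruct Hsg as [->| ->]; unfold Rabs; destruct Rcase_abs; lra).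
  rewrite H. pose proof (H1 l). pose proof (H2 l). pose proof (H3 l).
  pose proof (Rabs_pos cr). pose proof (Rabs_pos (ci l)). pose proof (Rabs_pos (eta1 l)). pose proof (Rabs_pos (eta2 l)).
  assert (Rabs cr * Rabs (eta1 l) <= Rabs cr * E) by (apply Rmult_le_compat_l; auto).
  assert (1 * Rabs (ci l) * Rabs (eta2 l) <= D * E) by (rewrite Rmult_1_l; apply Rmult_le_compat; auto).
  lra.
Qed.

Lemma Cmod_fs (z : C) : Cmod z <= Rabs (fst z) + Rabs (snd z).
Proof. destruct z. apply Cmod_pair_le. Qed.

Lemma Rabs_fst (z : C) : Rabs (fst z) <= Cmod z.
Proof. destruct z. apply Cmod_pair_abs. Qed.
Lemma Rabs_snd (z : C) : Rabs (snd z) <= Cmod z.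
Proof. destruct z. apply Cmod_pair_abs. Qed.

Lemma pointwise (e : R -> R -> R) (q p : nat) (M1 kap u b c x y : R) :
  0 < e xK yK -> (1 <= q)%nat -> (4 <= p)%nat -> 0 <= M1 ->
  (forall kap th th' x y, 0 < kap <= 1 -> in_Khat x y ->
    Cmod (Pr kap e q th x y) <= M1 * kap^2 /\
    Cmod (Cminus (Pr kap e q th x y) (Pr kap e q th' x y)) <= M1 * kap^3) ->
  0 < kap <= 1 -> (1 + M1 + sqrt (e xK yK)) * kap <= 1/2 -> in_Khat x y ->
  let se := sqrt (e xK yK) in
  let A := 1 + M1 + se in let K1 := 40 * A^4 + M1 in
  let cf := fun l => (u / INR p, - (2 / (INR p * kap * se)) * (b * cos (thl p l) + c * sin (thl p l))) in
  Cmod (Cminus (RtoC (u + b * (x - xK) + c * (y - yK))) (gpw_comb kap e p q cf x y))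
    <= 2 * (M1 + e xK yK + K1 + 2 * K1 / se) * (Rabs u + Rabs b + Rabs c) * kap^2.
Proof.
  intros He Hq Hp HM1 HPr Hk HA Hxy se A K1 cf.
  assert (Hse : 0 < se) by (apply sqrt_lt_R0; auto).
  assert (Hse2 : se^2 = e xK yK) by (unfold se; simpl; rewrite Rmult_1_r; apply sqrt_sqrt; lra).
  assert (Hp0 : 0 < INR p) by (apply lt_0_INR; lia).
  assert (Hpp : INR (S (p - 1)) = INR p) by (f_equal; lia).
  set (X := x - xK). set (Y := y - yK).
  set (phi := fun l => gpw kap e q (thl p l) x y).
  set (Q := fun l => Pr kap e q (thl p l) x y).
  set (s0 := fst (Q 0%nat)). set (r0 := snd (Q 0%nat)).
  set (t := fun l => kap * se * (cos (thl p l) * X + sin (thl p l) * Y)).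
  set (eta1 := fun l => fst (phi l) - (1 + s0 - t l ^ 2 / 2)).
  set (eta2 := fun l => snd (phi l) - (t l + r0)).
  assert (Hk3 : 0 < kap^3) by (apply pow_lt; lra).
  assert (Hk2 : 0 < kap^2) by (apply pow_lt; lra).
  assert (HK1 : 0 <= K1) by (unfold K1; pose proof (pow2_ge_0 (A^2)); replace (A^4) with ((A^2)^2) by ring; nra).
  assert (Heta : forall l, Rabs (eta1 l) <= K1 * kap^3 /\ Rabs (eta2 l) <= K1 * kap^3).
  { intros l. destruct (HPr kap (thl p l) (thl p 0) x y Hk Hxy) as [Hq1 Hq2].
    destruct (gpw_expand e q M1 kap (thl p l) x y He Hq HM1 Hk HA Hxy Hq1) as [G1 G2].
    pose proof (Rabs_fst (Cminus (Pr kap e q (thl p l) x y) (Pr kap e q (thl p 0) x y))) as D1.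
    pose proof (Rabs_snd (Cminus (Pr kap e q (thl p l) x y) (Pr kap e q (thl p 0) x y))) as D2.
    simpl in D1, D2.
    split.
    - unfold eta1, phi, s0, Q, t. fold se in G1. fold X Y in G1.
      replace (fst (gpw kap e q (thl p l) x y) - (1 + fst (Pr kap e q (thl p 0) x y) -
                 (kap * se * (cos (thl p l) * X + sin (thl p l) * Y)) ^ 2 / 2))
        with ((fst (gpw kap e q (thl p l) x y) - (1 + fst (Pr kap e q (thl p l) x y) -
                 (kap * se * (cos (thl p l) * X + sin (thl p l) * Y)) ^ 2 / 2))
              + (fst (Pr kap e q (thl p l) x y) + - fst (Pr kap e q (thl p 0) x y))) by ring.
      eapply Rle_trans. apply Rabs_triang. unfold K1. fold A in G1. lra.
    - unfold eta2, phi, r0, Q, t. fold se in G2. fold X Y in G2.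
      replace (snd (gpw kap e q (thl p l) x y) - (kap * se * (cos (thl p l) * X + sin (thl p l) * Y) + snd (Pr kap e q (thl p 0) x y)))
        with ((snd (gpw kap e q (thl p l) x y) - (kap * se * (cos (thl p l) * X + sin (thl p l) * Y) + snd (Pr kap e q (thl p l) x y)))
              + (snd (Pr kap e q (thl p l) x y) + - snd (Pr kap e q (thl p 0) x y))) by ring.
      eapply Rle_trans. apply Rabs_triang. unfold K1. fold A in G2. lra. }
  set (g := 2 / (INR p * kap * se)).
  assert (Hg : 0 < g) by (unfold g; apply Rdiv_lt_0_compat; [lra|]; apply Rmult_lt_0_compat; [nra|lra]).
  set (D := g * (Rabs b + Rabs c)).
  assert (Hci : forall l, Rabs (- g * (b * cos (thl p l) + c * sin (thl p l))) <= D).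
  { intros l. rewrite Rabs_mult, Rabs_Ropp, (Rabs_pos_eq g) by lra. unfold D. apply Rmult_le_compat_l; [lra|].
    eapply Rle_trans. apply Rabs_triang. rewrite !Rabs_mult.
    assert (Rabs (cos (thl p l)) <= 1) by (apply Rabs_le; pose proof (COS_bound (thl p l)); lra).
    assert (Rabs (sin (thl p l)) <= 1) by (apply Rabs_le; pose proof (SIN_bound (thl p l)); lra).
    pose proof (Rabs_pos b). pose proof (Rabs_pos c). pose proof (Rabs_pos (cos (thl p l))). pose proof (Rabs_pos (sin (thl p l))).
    nra. }
  assert (HE1 : forall l, Rabs (eta1 l) <= K1 * kap^3) by (intros; apply Heta).
  assert (HE2 : forall l, Rabs (eta2 l) <= K1 * kap^3) by (intros; apply Heta).
  assert (HKk : 0 <= K1 * kap^3) by (apply Rmult_le_pos; lra).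
  assert (Hcr : Rabs (u / INR p) = Rabs u / INR p) by (unfold Rdiv; rewrite Rabs_mult, Rabs_inv, (Rabs_pos_eq (INR p)); lra).
  assert (HpD : INR p * ((Rabs u / INR p + D) * (K1 * kap^3)) = Rabs u * K1 * kap^3 + 2 * (Rabs b + Rabs c) * K1 / se * kap^2).
  { unfold D, g. field. split; lra. }
  pose proof (main_sums p u b c X Y kap se s0 r0 eta1 eta2 Hp (proj1 Hk) Hse) as [E1 E2].
  assert (Fst : fst (gpw_comb kap e p q cf x y) =
     ltac:(let T := type of E1 in match T with _ = ?R => exact R end)).
  { rewrite <- E1. unfold gpw_comb. rewrite csum_fst. apply sum_eq. intros l _.
    unfold eta1, eta2, phi, cf, t, thl. simpl. clearbody se s0 r0 X Y. field; repeat split; lra. }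
  assert (Snd : snd (gpw_comb kap e p q cf x y) =
     ltac:(let T := type of E2 in match T with _ = ?R => exact R end)).
  { rewrite <- E2. unfold gpw_comb. rewrite csum_snd. apply sum_eq. intros l _.
    unfold eta1, eta2, phi, cf, t, thl. simpl. clearbody se s0 r0 X Y. field; repeat split; lra. }
  assert (Hs0 : Rabs s0 <= M1 * kap^2) by (eapply Rle_trans; [apply Rabs_fst|apply (HPr kap (thl p 0) (thl p 0) x y Hk Hxy)]).
  assert (Hr0 : Rabs r0 <= M1 * kap^2) by (eapply Rle_trans; [apply Rabs_snd|apply (HPr kap (thl p 0) (thl p 0) x y Hk Hxy)]).
  assert (HXY : X^2 + Y^2 <= 1) by (destruct Hxy as [Hx Hy]; unfold X, Y, xK, yK; nra).
  pose proof (Rabs_pos u) as Pu. pose proof (Rabs_pos b) as Pb. pose proof (Rabs_pos c) as Pc.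
  assert (Hkk : kap^3 <= kap^2) by (simpl; nra).
  assert (HK1k : Rabs u * K1 * kap^3 <= Rabs u * K1 * kap^2) by (apply Rmult_le_compat_l; [apply Rmult_le_pos|]; lra).
  set (K := M1 + e xK yK + K1 + 2 * K1 / se).
  assert (HKse : 0 <= 2 * K1 / se) by (apply Rdiv_le_0_compat; lra).
  assert (Br : Rabs (fst (Cminus (RtoC (u + b * X + c * Y)) (gpw_comb kap e p q cf x y)))
               <= K * (Rabs u + Rabs b + Rabs c) * kap^2).
  { simpl. rewrite Fst.
    set (Sm := sum_f_R0 _ (p - 1)).
    assert (HSm : Rabs Sm <= Rabs u * K1 * kap^3 + 2 * (Rabs b + Rabs c) * K1 / se * kap^2).
    { unfold Sm.
      rewrite (sum_eq _ (fun l => u / INR p * eta1 l + (-1) * (- g * (b * cos (thl p l) + c * sin (thl p l))) * eta2 l))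
        by (intros; unfold g; field; repeat split; lra).
      eapply Rle_trans. apply (err_sum (p - 1) (u / INR p) (fun l => - g * (b * cos (thl p l) + c * sin (thl p l))) eta1 eta2 (K1 * kap^3) D (-1)); auto.
      rewrite Hpp, Hcr, HpD. lra. }
    replace (u + b * X + c * Y + - (u + b * X + c * Y + (u * s0 - u * kap ^ 2 * se ^ 2 * (X ^ 2 + Y ^ 2) / 4) + Sm))
      with (- (u * s0) + u * (kap^2 * se^2 * (X^2 + Y^2) / 4) - Sm) by (field).
    assert (T1 : Rabs (u * s0) <= Rabs u * M1 * kap^2) by (rewrite Rabs_mult, Rmult_assoc; apply Rmult_le_compat_l; lra).
    assert (T2 : Rabs (u * (kap^2 * se^2 * (X^2 + Y^2) / 4)) <= Rabs u * e xK yK * kap^2).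
    { rewrite Rabs_mult. rewrite Hse2.
      assert (0 <= X^2 + Y^2) by (pose proof (pow2_ge_0 X); pose proof (pow2_ge_0 Y); lra).
      assert (0 <= kap ^ 2 * e xK yK) by (apply Rmult_le_pos; lra).
      rewrite (Rabs_pos_eq (kap ^ 2 * e xK yK * (X ^ 2 + Y ^ 2) / 4)).
      2: { apply Rmult_le_pos; [|lra]. apply Rmult_le_pos; lra. }
      rewrite (Rmult_assoc (Rabs u)). apply Rmult_le_compat_l; [lra|]. nra. }
    unfold Rminus. eapply Rle_trans. apply Rabs_triang. rewrite Rabs_Ropp.
    eapply Rle_trans. apply Rplus_le_compat_r. apply Rabs_triang. rewrite Rabs_Ropp.
    unfold K. 
    assert (Rabs u * e xK yK * kap^2 + Rabs u * M1 * kap^2 + Rabs u * K1 * kap^2 + (Rabs b + Rabs c) * (2 * K1 / se) * kap^2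
            <= (M1 + e xK yK + K1 + 2 * K1 / se) * (Rabs u + Rabs b + Rabs c) * kap^2).
    { assert (0 <= (Rabs u) * (2 * K1 / se) * kap^2) by (apply Rmult_le_pos; [apply Rmult_le_pos|]; lra).
      assert (0 <= (Rabs b + Rabs c) * (M1 + e xK yK + K1) * kap^2) by (apply Rmult_le_pos; [apply Rmult_le_pos|]; lra).
      nra. }
    replace (2 * (Rabs b + Rabs c) * K1 / se * kap ^ 2) with ((Rabs b + Rabs c) * (2 * K1 / se) * kap^2) in HSm by (field; lra).
    lra. }
  assert (Bi : Rabs (snd (Cminus (RtoC (u + b * X + c * Y)) (gpw_comb kap e p q cf x y)))
               <= K * (Rabs u + Rabs b + Rabs c) * kap^2).
  { simpl. rewrite Snd.
    set (Sm := sum_f_R0 _ (p - 1)).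
    assert (HSm : Rabs Sm <= Rabs u * K1 * kap^3 + 2 * (Rabs b + Rabs c) * K1 / se * kap^2).
    { unfold Sm.
      rewrite (sum_eq _ (fun l => u / INR p * eta2 l + 1 * (- g * (b * cos (thl p l) + c * sin (thl p l))) * eta1 l))
        by (intros; unfold g; field; repeat split; lra).
      eapply Rle_trans. apply (err_sum (p - 1) (u / INR p) (fun l => - g * (b * cos (thl p l) + c * sin (thl p l))) eta2 eta1 (K1 * kap^3) D 1); auto.
      rewrite Hpp, Hcr, HpD. lra. }
    replace (0 + - (u * r0 + Sm)) with (- (u * r0) - Sm) by ring.
    assert (T1 : Rabs (u * r0) <= Rabs u * M1 * kap^2) by (rewrite Rabs_mult, Rmult_assoc; apply Rmult_le_compat_l; lra).
    unfold Rminus. eapply Rle_trans. apply Rabs_triang. rewrite !Rabs_Ropp.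
    unfold K.
    assert (Rabs u * M1 * kap^2 + Rabs u * K1 * kap^2 + (Rabs b + Rabs c) * (2 * K1 / se) * kap^2
            <= (M1 + e xK yK + K1 + 2 * K1 / se) * (Rabs u + Rabs b + Rabs c) * kap^2).
    { assert (0 <= (Rabs u) * (2 * K1 / se) * kap^2) by (apply Rmult_le_pos; [apply Rmult_le_pos|]; lra).
      assert (0 <= (Rabs b + Rabs c) * (M1 + e xK yK + K1) * kap^2) by (apply Rmult_le_pos; [apply Rmult_le_pos|]; lra).
      assert (0 <= Rabs u * e xK yK * kap^2) by (apply Rmult_le_pos; [apply Rmult_le_pos|]; lra).
      nra. }
    replace (2 * (Rabs b + Rabs c) * K1 / se * kap ^ 2) with ((Rabs b + Rabs c) * (2 * K1 / se) * kap^2) in HSm by (field; lra).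
    lra. }
  eapply Rle_trans. apply Cmod_fs.
  change (M1 + e xK yK + K1 + 2 * K1 / se) with K.
  replace (2 * K * (Rabs u + Rabs b + Rabs c) * kap ^ 2) with
    (K * (Rabs u + Rabs b + Rabs c) * kap ^ 2 + K * (Rabs u + Rabs b + Rabs c) * kap ^ 2) by ring.
  apply Rplus_le_compat; assumption.
Qed.

Lemma CC_gpw kap e q th : CC (fun x y => gpw kap e q th x y).
Proof.
  unfold gpw. apply (CC_exp (fun x y => gpw_P kap e q th x y)).
  unfold gpw_P.
  apply (CC_csum (q + 1) (fun i x y => csum (q + 1 - i) (fun j =>
     Cmult (lam kap e q th i j) (RtoC ((x - xK) ^ i * (y - yK) ^ j))))).
  intros i. apply (CC_csum (q + 1 - i) (fun j x y => Cmult (lam kap e q th i j) (RtoC ((x - xK) ^ i * (y - yK) ^ j)))).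
  intros j. apply (CC_mult (fun _ _ => lam kap e q th i j) (fun x y => RtoC ((x - xK) ^ i * (y - yK) ^ j))).
  apply CC_const. apply CC_R. apply Ct_mult; apply Ct_pow; apply Ct_minus; auto using Ct_x, Ct_y, Ct_const.
Qed.

Lemma CC_comb kap e p q cf : CC (fun x y => gpw_comb kap e p q cf x y).
Proof.
  unfold gpw_comb.
  apply (CC_csum (p - 1) (fun l x y => Cmult (cf l) (gpw kap e q (2 * PI * INR l / INR p) x y))).
  intros l. apply (CC_mult (fun _ _ => cf l) (fun x y => gpw kap e q (2 * PI * INR l / INR p) x y)).
  apply CC_const. apply CC_gpw.
Qed.

Lemma glb_le (E : R -> Prop) (r R0 : R) : E r -> r <= R0 -> Rbar_le (Glb_Rbar E) (Finite R0).
Proof.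
  intros Hr Hle. destruct (Glb_Rbar_correct E) as [Hlb _].
  eapply Rbar_le_trans. apply Hlb. exact Hr. simpl. exact Hle.
Qed.

Lemma L2_ge0 G : 0 <= L2Khat G.
Proof. unfold L2Khat. apply sqrt_pos. Qed.

Theorem lemma2 :
  forall (eps : R -> R -> R),
    smooth_on_Khat eps ->
    (forall x y, in_Khat x y -> 0 < eps x y) ->
  forall (n q : nat), (2 <= n)%nat -> (n + 1 <= q)%nat ->
  exists Cst : R,
  forall kap : R, 0 < kap ->
  forall a b c : R,
    let f := fun x y : R => (a + b * x + c * y)%R in
    Rbar_le (best_approx_err kap eps (2 * n + 1) q f)
      (Finite (Cst * kap ^ 2 * Rabs (eps xK yK) * L2Khat (fun x y => RtoC (f x y)))).
Proof.
  intros eps _ Hpos n q Hn Hq.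
  assert (He : 0 < eps xK yK) by (apply Hpos; unfold in_Khat, xK, yK; lra).
  assert (Hq1 : (1 <= q)%nat) by lia.
  assert (Hp4 : (4 <= 2 * n + 1)%nat) by lia.
  destruct (Pr_bounds eps q He Hq1) as [M1 [HM1 HPr]].
  set (e0 := eps xK yK) in *.
  set (se := sqrt e0).
  assert (Hse : 0 < se) by (apply sqrt_lt_R0; auto).
  set (A := 1 + M1 + se).
  set (K1 := 40 * A^4 + M1).
  set (K := M1 + e0 + K1 + 2 * K1 / se).
  assert (HA : 1 <= A) by (unfold A; lra).
  assert (HK1 : 0 <= K1) by (unfold K1; replace (A^4) with ((A^2)^2) by ring; pose proof (pow2_ge_0 (A^2)); lra).
  assert (HK : 0 <= K) by (unfold K; assert (0 <= 2 * K1 / se) by (apply Rdiv_le_0_compat; lra); lra).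
  set (k1 := 1 / (2 * A)).
  assert (Hk1 : 0 < k1) by (unfold k1; apply Rdiv_lt_0_compat; lra).
  assert (Hk1A : A * k1 = 1/2) by (unfold k1; field; lra).
  assert (Hk11 : k1 <= 1) by nra.
  exists (Rmax (12 * K / e0) (1 / (k1^2 * e0))).
  intros kap Hk a b c f.
  rewrite (Rabs_pos_eq e0) by lra.
  set (u := a + b / 2 + c / 2).
  assert (Hf : forall x y, f x y = u + b * (x - xK) + c * (y - yK)) by (intros; unfold f, u, xK, yK; field).
  change (L2Khat (fun x y => RtoC (f x y))) with (L2Khat (fun x y => RtoC (a + b * x + c * y))).
  rewrite (L2_affine a b c).
  set (V := a ^ 2 + b ^ 2 / 3 + c ^ 2 / 3 + a * b + a * c + b * c / 2).
  assert (HV : V = u^2 + b^2/12 + c^2/12) by (unfold V, u; field).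
  assert (HV0 : 0 <= V) by (rewrite HV; pose proof (pow2_ge_0 u); pose proof (pow2_ge_0 b); pose proof (pow2_ge_0 c); lra).
  assert (HsV : 0 <= sqrt V) by apply sqrt_pos.
  assert (Hsum : Rabs u + Rabs b + Rabs c <= 6 * sqrt V).
  { pose proof (sqrt_sqrt V HV0).
    pose proof (Rabs_pos u). pose proof (Rabs_pos b). pose proof (Rabs_pos c).
    assert (Eu : Rabs u * Rabs u = u^2) by (rewrite <- Rabs_mult; rewrite Rabs_pos_eq; [ring|nra]).
    assert (Eb : Rabs b * Rabs b = b^2) by (rewrite <- Rabs_mult; rewrite Rabs_pos_eq; [ring|nra]).
    assert (Ec : Rabs c * Rabs c = c^2) by (rewrite <- Rabs_mult; rewrite Rabs_pos_eq; [ring|nra]).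
    assert ((Rabs u + Rabs b + Rabs c)^2 <= (6 * sqrt V)^2).
    { replace ((6 * sqrt V)^2) with (36 * (sqrt V * sqrt V)) by ring. rewrite H, HV, <- Eu, <- Eb, <- Ec. pose proof (pow2_ge_0 (Rabs u - Rabs b)). pose proof (pow2_ge_0 (Rabs b - Rabs c)). pose proof (pow2_ge_0 (Rabs u - Rabs c)). nra. }
    nra. }
  assert (HCst1 : 12 * K / e0 <= Rmax (12 * K / e0) (1 / (k1^2 * e0))) by apply Rmax_l.
  assert (HCst2 : 1 / (k1^2 * e0) <= Rmax (12 * K / e0) (1 / (k1^2 * e0))) by apply Rmax_r.
  set (Cst := Rmax (12 * K / e0) (1 / (k1^2 * e0))) in *.
  assert (Hk2 : 0 < kap^2) by (apply pow_lt; lra).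
  destruct (Rle_dec kap k1) as [Hsmall|Hbig].
  - (* small kappa: use the explicit combination *)
    set (cf := fun l => (u / INR (2 * n + 1), - (2 / (INR (2 * n + 1) * kap * se)) *
                (b * cos (thl (2 * n + 1) l) + c * sin (thl (2 * n + 1) l)))).
    apply (glb_le _ (L2Khat (fun x y => Cminus (RtoC (f x y)) (gpw_comb kap eps (2 * n + 1) q cf x y)))).
    { exists cf. reflexivity. }
    eapply Rle_trans. apply (L2_bound _ (2 * K * (Rabs u + Rabs b + Rabs c) * kap^2)).
    + apply (CC_minus (fun x y => RtoC (f x y)) (fun x y => gpw_comb kap eps (2 * n + 1) q cf x y)).
      apply CC_R. unfold f. apply Ct_plus; [apply Ct_plus|]; auto using Ct_const, Ct_mult, Ct_x, Ct_y.
      apply CC_comb.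
    + apply Rmult_le_pos; [|lra]. apply Rmult_le_pos; [lra|]. pose proof (Rabs_pos u). pose proof (Rabs_pos b). pose proof (Rabs_pos c). lra.
    + intros x y Hxy. rewrite Hf.
      apply (pointwise eps q (2 * n + 1) M1 kap u b c x y He Hq1 Hp4 HM1 HPr); auto.
      split; lra. fold e0 se A. nra.
    + assert (2 * K * (Rabs u + Rabs b + Rabs c) * kap ^ 2 <= 2 * K * (6 * sqrt V) * kap^2).
      { apply Rmult_le_compat_r; [lra|]. apply Rmult_le_compat_l; lra. }
      assert (12 * K / e0 * kap^2 * e0 * sqrt V <= Cst * kap ^ 2 * e0 * sqrt V).
      { apply Rmult_le_compat_r; auto. apply Rmult_le_compat_r; [lra|]. apply Rmult_le_compat_r; lra. }
      replace (12 * K / e0 * kap^2 * e0 * sqrt V) with (2 * K * (6 * sqrt V) * kap^2) in H0 by (field; lra).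
      lra.
  - (* large kappa: zero combination *)
    apply (glb_le _ (L2Khat (fun x y => Cminus (RtoC (f x y)) (gpw_comb kap eps (2 * n + 1) q (fun _ => (0,0)) x y)))).
    { exists (fun _ => (0,0)). reflexivity. }
    replace (fun x y => Cminus (RtoC (f x y)) (gpw_comb kap eps (2 * n + 1) q (fun _ => (0,0)) x y))
      with (fun x y => RtoC (f x y)).
    2: { apply functional_extensionality; intros x; apply functional_extensionality; intros y.
         unfold gpw_comb. rewrite csum_zero. unfold Cminus, Cplus, Copp, RtoC; simpl. f_equal; ring.
         intros k _. unfold Cmult; simpl. f_equal; ring. }
    change (L2Khat (fun x y => RtoC (f x y))) with (L2Khat (fun x y => RtoC (a + b * x + c * y))).
    rewrite (L2_affine a b c). fold V.
    assert (1 <= Cst * kap^2 * e0).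
    { assert (k1^2 < kap^2) by (simpl; nra).
      assert (1 / (k1^2 * e0) * kap^2 * e0 <= Cst * kap^2 * e0).
      { apply Rmult_le_compat_r; [lra|]. apply Rmult_le_compat_r; lra. }
      replace (1 / (k1^2 * e0) * kap^2 * e0) with (kap^2 / k1^2) in H0 by (field; split; lra).
      assert (1 <= kap^2 / k1^2).
      { apply (Rmult_le_reg_r (k1^2)). apply pow_lt; lra. unfold Rdiv. rewrite Rmult_assoc, Rinv_l. lra.
        apply Rgt_not_eq, pow_lt; lra. }
      lra. }
    nra.
Qed.
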